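(* Let $L$ be a split regular Hom-Lie color algebra with symmetric root system $\Lambda$. If $\mathrm{Z}(L)=0$ and $[L,L]=L$, then $$L=\bigoplus_{[\alpha]\in\Lambda/\sim}I_{[\alpha]},$$ where $I_{[\alpha]}:=L_{\Lambda_\alpha}$ are ideals of $L$ with $[I_{[\alpha]},I_{[\beta]}]=0$ for $[\alpha]\neq[\beta]$.
   Context: Let $\mathbb{K}$ be a field and $\Gamma$ an abelian group. A bi-character is $\varepsilon:\Gamma\times\Gamma\to\mathbb{K}\setminus\{0\}$ with $\varepsilon(a,b)\varepsilon(b,a)=1$, $\varepsilon(a,b+c)=\varepsilon(a,b)\varepsilon(a,c)$, $\varepsilon(a+b,c)=\varepsilon(a,c)\varepsilon(b,c)$. A Hom-Lie color algebra $(L,[\cdot,\cdot],\phi,\varepsilon)$ is a $\Gamma$-graded space $L=\bigoplus_gL_g$ with bilinear $[\cdot,\cdot]$, $[L_g,L_h]\subset L_{g+h}$, linear $\phi$ with $\phi(L_g)\subset L_g$, $\phi([x,y])=[\phi x,\phi y]$, such that for homogeneous $x,y,z$ of degrees $\bar x,\bar y,\bar z$: $[x,y]=-\varepsilon(\bar x,\bar y)[y,x]$ and $\varepsilon(\bar z,\bar x)[\phi(x),[y,z]]+\varepsilon(\bar x,\bar y)[\phi(y),[z,x]]+\varepsilon(\bar y,\bar z)[\phi(z),[x,y]]=0$; regular means $\phi$ bijective. A subalgebra is a graded subspace $A$ with $[A,A]\subset A$, $\phi(A)=A$; abelian if $[A,A]=0$. An ideal is a graded subspace $I$ with $[I,L]\subset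 I$ and $\phi(I)=I$. The annihilator is $\mathrm{Z}(L)=\{x\in L:[x,L]=0\}$. $H=\bigoplus_gH_g$ is a maximal abelian graded subalgebra (so $\phi(H_0)=H_0$). For linear $\alpha:H_0\to\mathbb{K}$, $L_\alpha=\{v:[h,v]=\alpha(h)\phi(v)\ \forall h\in H_0\}$; $\Lambda=\{\alpha\in H_0^*\setminus\{0\}:L_\alpha\neq0\}$; $L$ is split if $L=H\oplus(\bigoplus_{\alpha\in\Lambda}L_\alpha)$. $\Lambda$ is symmetric if $\alpha\in\Lambda\Rightarrow-\alpha\in\Lambda$. For $z\in\mathbb{Z}$, $\alpha\phi^{z}:=\alpha\circ(\phi|_{H_0})^{z}$; $\mathbb{N}=\{0,1,2,\dots\}$. Connection: for $\alpha,\beta\in\Lambda$, $\alpha$ is connected to $\beta$ if there exist $k\ge1$ and $\alpha_1,\dots,\alpha_k\in\Lambda$ such that: if $k=1$, $\alpha_1\in\{\alpha\phi^{-n}:n\in\mathbb{N}\}\cap\{\pm\beta\phi^{-m}:m\in\mathbb{N}\}$; if $k\ge2$, then $\alpha_1\in\{\alpha\phi^{-n}:n\in\mathbb{N}\}$, for each $i=1,\dots,k-2$ one has $\alpha_1\phi^{-i}+\alpha_2\phi^{-i}+\alpha_3\phi^{-i+1}+\cdots+\alpha_{i+1}\phi^{-1}\in\Lambda$, and $\alpha_1\phi^{-k+1}+\alpha_2\phi^{-k+1}+\alpha_3\phi^{-k+2}+\cdots+\alpha_k\phi^{-1}\in\{\pm\beta\phi^{-m}:m\in\mathbb{N}\}$.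 Connectedness $\sim$ is an equivalence relation on $\Lambda$; $\Lambda_\alpha:=\{\beta\in\Lambda:\beta\sim\alpha\}$. Define $H_{\Lambda_\alpha}:=\mathrm{span}_{\mathbb{K}}\{[L_\beta,L_{-\beta}]:\beta\in\Lambda_\alpha\}\subset H$, $V_{\Lambda_\alpha}:=\bigoplus_{\beta\in\Lambda_\alpha}L_\beta$, and $L_{\Lambda_\alpha}:=H_{\Lambda_\alpha}\oplus V_{\Lambda_\alpha}$. *)

(* Defs.v *)
From HB Require Import structures.
From mathcomp Require Import all_boot all_order all_algebra.
Import GRing.Theory.
Local Open Scope ring_scope.

Section HomLieColor.

Context {K : fieldType} {G : zmodType} {L : lmodType K}.

Definition subspace (A : L -> Prop) : Prop :=
  A 0 /\ forall (a : K) (x y : L), A x -> A y -> A (a *: x + y).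

Definition fam_sum {I : Type} (P : I -> Prop) (F : I -> L -> Prop) (x : L) : Prop :=
  exists (n : nat) (i : 'I_n -> I) (v : 'I_n -> L),
    (forall k, P (i k) /\ F (i k) (v k)) /\ x = \sum_(k < n) v k.

Definition fam_indep {I : Type} (P : I -> Prop) (F : I -> L -> Prop)
    (E : I -> I -> Prop) : Prop :=
  forall (n : nat) (i : 'I_n -> I) (v : 'I_n -> L),
    (forall k, P (i k) /\ F (i k) (v k)) ->
    (forall k l, k != l -> ~ E (i k) (i l)) ->
    \sum_(k < n) v k = 0 -> forall k, v k = 0.

Definition graded_space (Lg : G -> L -> Prop) : Prop :=
  (forall g, subspace (Lg g)) /\
  (forall x, fam_sum (fun _ => True) Lg x) /\
  fam_indep (fun _ => True) Lg (fun g h => g = h).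

Definition graded_subspace (Lg : G -> L -> Prop) (A : L -> Prop) : Prop :=
  subspace A /\
  forall x, A x -> fam_sum (fun _ => True) (fun g y => Lg g y /\ A y) x.

Definition bicharacter (eps : G -> G -> K) : Prop :=
  (forall a b, eps a b != 0) /\
  (forall a b, eps a b * eps b a = 1) /\
  (forall a b c, eps a (b + c) = eps a b * eps a c) /\
  (forall a b c, eps (a + b) c = eps a c * eps b c).

Definition bilinear_map (br : L -> L -> L) : Prop :=
  (forall (a : K) x y z, br (a *: x + y) z = a *: br x z + br y z) /\
  (forall (a : K) x y z, br z (a *: x + y) = a *: br z x + br z y).

Definition linear_map (phi : L -> L) : Prop :=
  forall (a : K) x y, phi (a *: x + y) = a *: phi x + phi y.

Definition HomLieColor (Lg : G -> L -> Prop) (br : L -> L -> L) (phi : L -> L)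
    (eps : G -> G -> K) : Prop :=
  graded_space Lg /\ bicharacter eps /\ bilinear_map br /\ linear_map phi /\
  (forall g h x y, Lg g x -> Lg h y -> Lg (g + h) (br x y)) /\
  (forall g x, Lg g x -> Lg g (phi x)) /\
  (forall x y, phi (br x y) = br (phi x) (phi y)) /\
  (forall a b x y, Lg a x -> Lg b y -> br x y = - (eps a b *: br y x)) /\
  (forall a b c x y z, Lg a x -> Lg b y -> Lg c z ->
     eps c a *: br (phi x) (br y z) + eps a b *: br (phi y) (br z x)
       + eps b c *: br (phi z) (br x y) = 0).

Definition phi_stable (phi : L -> L) (A : L -> Prop) : Prop :=
  (forall x, A x -> A (phi x)) /\ (forall x, A x -> exists y, A y /\ phi y = x).

Definition subalgebra (Lg : G -> L -> Prop) (br : L -> L -> L) (phi : L -> L)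
    (A : L -> Prop) : Prop :=
  graded_subspace Lg A /\ (forall x y, A x -> A y -> A (br x y)) /\ phi_stable phi A.

Definition abelian (br : L -> L -> L) (A : L -> Prop) : Prop :=
  forall x y, A x -> A y -> br x y = 0.

Definition ideal (Lg : G -> L -> Prop) (br : L -> L -> L) (phi : L -> L)
    (I : L -> Prop) : Prop :=
  graded_subspace Lg I /\
  (forall x y, I x -> I (br x y)) /\ phi_stable phi I.

Definition max_abelian_subalgebra (Lg : G -> L -> Prop) (br : L -> L -> L)
    (phi : L -> L) (H : L -> Prop) : Prop :=
  subalgebra Lg br phi H /\ abelian br H /\
  forall A, subalgebra Lg br phi A -> abelian br A ->
    (forall x, H x -> A x) -> forall x, A x -> H x.

Definition zero_annihilator (br : L -> L -> L) : Prop :=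
  forall x, (forall y, br x y = 0) -> x = 0.

Definition span_brackets (br : L -> L -> L) (P : L -> L -> Prop) (x : L) : Prop :=
  exists (n : nat) (c : 'I_n -> K) (u w : 'I_n -> L),
    (forall k, P (u k) (w k)) /\ x = \sum_(k < n) c k *: br (u k) (w k).

(* Elements of H_0^* are represented by functions L -> K, considered only
   through their values on H_0 = H cap L_0. *)
Section Roots.
Variables (Lg : G -> L -> Prop) (H : L -> Prop) (br : L -> L -> L)
  (phi psi : L -> L).
(* psi is the inverse of the (bijective) phi *)

Definition H0 (h : L) : Prop := H h /\ Lg 0 h.

Definition eqH0 (a b : L -> K) : Prop := forall h, H0 h -> a h = b h.

Definition linear_on_H0 (a : L -> K) : Prop :=
  forall (c : K) h h', H0 h -> H0 h' -> a (c *: h + h') = c * a h + a h'.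

Definition Lroot (a : L -> K) (v : L) : Prop :=
  forall h, H0 h -> br h v = a h *: phi v.

Definition isRoot (a : L -> K) : Prop :=
  linear_on_H0 a /\ (exists h, H0 h /\ a h != 0) /\ (exists v, v != 0 /\ Lroot a v).

Definition phin (a : L -> K) (n : nat) : L -> K := fun h => a (iter n psi h).

Definition oppf (a : L -> K) : L -> K := fun h => - a h.

(* For alpha_1, ..., alpha_k given as (a 1), ..., (a k):
   S a i = alpha_1 phi^{-i} + alpha_2 phi^{-i} + alpha_3 phi^{-i+1} + ... + alpha_{i+1} phi^{-1}
   (and S a 0 = alpha_1). *)
Definition Ssum (a : nat -> L -> K) (i : nat) : L -> K :=
  fun h => phin (a 1%N) i h + \sum_(2 <= j < i.+2) phin (a j) (i.+2 - j) h.

Definition connected (alpha beta : L -> K) : Prop :=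
  exists (k : nat) (a : nat -> L -> K),
    (1 <= k)%N /\
    (forall j, (1 <= j <= k)%N -> isRoot (a j)) /\
    (exists n, eqH0 (a 1%N) (phin alpha n)) /\
    (forall i, (1 <= i <= k - 2)%N -> isRoot (Ssum a i)) /\
    (exists m, eqH0 (Ssum a (k - 1)) (phin beta m) \/
               eqH0 (Ssum a (k - 1)) (phin (oppf beta) m)).

Definition LambdaClass (alpha beta : L -> K) : Prop :=
  isRoot beta /\ connected beta alpha.

Definition HLambda (alpha : L -> K) (x : L) : Prop :=
  span_brackets br (fun u w => exists beta, LambdaClass alpha beta /\
                         Lroot beta u /\ Lroot (oppf beta) w) x.

Definition VLambda (alpha : L -> K) (x : L) : Prop :=
  fam_sum (LambdaClass alpha) Lroot x.

(* I_[alpha] = L_{Lambda_alpha} = H_{Lambda_alpha} + V_{Lambda_alpha} *)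
Definition Iclass (alpha : L -> K) (x : L) : Prop :=
  exists h v, HLambda alpha h /\ VLambda alpha v /\ x = h + v.

Definition split_alg : Prop :=
  (forall x, exists h v, H h /\ fam_sum isRoot Lroot v /\ x = h + v) /\
  (forall (n : nat) (h : L) (b : 'I_n -> L -> K) (v : 'I_n -> L),
     H h -> (forall k, isRoot (b k) /\ Lroot (b k) (v k)) ->
     (forall k l, k != l -> ~ eqH0 (b k) (b l)) ->
     h + \sum_(k < n) v k = 0 -> h = 0 /\ forall k, v k = 0).

Definition symmetric_roots : Prop := forall a, isRoot a -> isRoot (oppf a).

End Roots.

End HomLieColor.

(* Main.v *)
Require Import Defs.
From HB Require Import structures.
From mathcomp Require Import all_boot all_order all_algebra.
Import GRing.Theory.
Local Open Scope ring_scope.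
From HB Require Import structures.
From mathcomp Require Import all_boot all_order all_algebra.
From Stdlib Require Import Classical ClassicalEpsilon.
From Stdlib Require List.
Require Import Defs.
Import GRing.Theory.
Local Open Scope ring_scope.
From mathcomp Require Import zify.
Set Implicit Arguments.
Unset Strict Implicit.

Definition pb (P : Prop) : bool :=
  if excluded_middle_informative P then true else false.

Lemma pbP (P : Prop) : reflect P (pb P).
Proof. by rewrite /pb; case: excluded_middle_informative => h; constructor. Qed.

Lemma pbT (P : Prop) : P -> pb P = true.
Proof. by move=> h; apply/pbP. Qed.
Lemma pbF (P : Prop) : ~ P -> pb P = false.
Proof. by move=> h; apply/pbP. Qed.

Section Gen.
Context {K : fieldType} {L : lmodType K}.

Lemma sub0 (A : L -> Prop) : subspace A -> A 0.
Proof. by case. Qed.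
Lemma subD (A : L -> Prop) x y : subspace A -> A x -> A y -> A (x + y).
Proof. by case=> _ h ax ay; have := h 1 x y ax ay; rewrite scale1r. Qed.
Lemma subZ (A : L -> Prop) c x : subspace A -> A x -> A (c *: x).
Proof. by case=> h0 h ax; have := h c x 0 ax h0; rewrite addr0. Qed.

Lemma subN (A : L -> Prop) x : subspace A -> A x -> A (- x).
Proof. by move=> sA ax; rewrite -scaleN1r; apply: subZ. Qed.
Lemma subB (A : L -> Prop) x y : subspace A -> A x -> A y -> A (x - y).
Proof. by move=> sA ax ay; apply: subD => //; apply: subN. Qed.

Lemma sub_sum (A : L -> Prop) (J : Type) (r : seq J) (F : J -> L) :
  subspace A -> (forall j, List.In j r -> A (F j)) -> A (\sum_(j <- r) F j).
Proof.
move=> sA; elim: r => [|j r IH] h; first by rewrite big_nil; apply: sub0.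
rewrite big_cons; apply: subD => //; first by apply: h; left.
by apply: IH => x hx; apply: h; right.
Qed.

Lemma sub_sum_ord (A : L -> Prop) n (F : 'I_n -> L) :
  subspace A -> (forall k, A (F k)) -> A (\sum_(k < n) F k).
Proof.
move=> sA h; apply: (big_ind A) => //; first exact: sub0.
by move=> x y; apply: subD.
Qed.

Lemma sub_eqv (A B : L -> Prop) : (forall x, A x <-> B x) -> subspace A -> subspace B.
Proof. by move=> e [h0 h]; split; [apply/e | move=> a x y /e ax /e ay; apply/e; apply: h]. Qed.

Lemma In_filterP {T : Type} (a : pred T) s x : List.In x (filter a s) <-> List.In x s /\ a x.
Proof.
elim: s => [|y s IH] /=; first by split => [|[]].
case ha: (a y) => /=.
  split; first by case=> [<-|/IH [h1 h2]]; [split; [left|] | split; [right|]].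
  by case=> [[<-|h1] h2]; [left | right; apply/IH].
split; first by case/IH => h1 h2; split; [right|].
case=> [[<-|h1] h2]; first by rewrite ha in h2.
by apply/IH.
Qed.

Lemma In_nth {T : Type} (d : T) s k : (k < size s)%N -> List.In (nth d s k) s.
Proof. by elim: s k => [|x s IH] [|k] //= hk; [left | right; apply: IH]. Qed.

Lemma filter_comm {T : Type} (a b : pred T) s : filter a (filter b s) = filter b (filter a s).
Proof. by rewrite -!filter_predI; apply: eq_filter => x /=; rewrite andbC. Qed.

Definition ssum {I : Type} (s : seq (I * L)) : L := foldr (fun p acc => p.2 + acc) 0 s.
Definition Fam {I : Type} (R : I -> L -> Prop) (s : seq (I * L)) : Prop :=
  List.Forall (fun p => R p.1 p.2) s.

Lemma ssumE {I : Type} (s : seq (I * L)) : ssum s = \sum_(p <- s) p.2.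
Proof. by elim: s => [|p s IH]; rewrite ?big_nil ?big_cons //= IH. Qed.

Lemma ssum_cat {I : Type} (s1 s2 : seq (I * L)) : ssum (s1 ++ s2) = ssum s1 + ssum s2.
Proof. by elim: s1 => [|p s IH] /=; rewrite ?add0r // IH addrA. Qed.

Lemma ssum_filter {I : Type} (a : pred (I * L)) (s : seq (I * L)) :
  ssum s = ssum (filter a s) + ssum (filter (predC a) s).
Proof.
elim: s => [|p s IH] /=; first by rewrite addr0.
by case: (a p) => /=; rewrite IH; [rewrite addrA | rewrite addrCA].
Qed.

Lemma ssum_map {I J : Type} (f : I * L -> J * L) (s : seq (I * L)) (g : L -> L) :
  g 0 = 0 -> (forall x y, g (x + y) = g x + g y) ->
  (forall p, (f p).2 = g p.2) -> ssum (map f s) = g (ssum s).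
Proof.
move=> g0 gD hf; elim: s => [|p s IH] /=; first by rewrite g0.
by rewrite IH hf gD.
Qed.

Lemma Fam_cons {I : Type} (R : I -> L -> Prop) p s :
  Fam R (p :: s) <-> R p.1 p.2 /\ Fam R s.
Proof. by split => [h|[h1 h2]]; [inversion h | constructor]. Qed.

Lemma Fam_nil {I : Type} (R : I -> L -> Prop) : Fam R [::].
Proof. by constructor. Qed.
#[local] Hint Resolve Fam_nil : core.

Lemma Fam_consE {I : Type} (R : I -> L -> Prop) p s :
  Fam R (p :: s) -> R p.1 p.2 /\ Fam R s.
Proof. by move=> h; inversion h. Qed.

Lemma Fam_impl {I : Type} (R R' : I -> L -> Prop) s :
  (forall i x, R i x -> R' i x) -> Fam R s -> Fam R' s.
Proof. by move=> h; apply: List.Forall_impl => p; apply: h. Qed.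

Lemma Fam_in {I : Type} (R : I -> L -> Prop) s p :
  Fam R s -> List.In p s -> R p.1 p.2.
Proof. by move/List.Forall_forall; apply. Qed.

Lemma Fam_filter {I : Type} (R : I -> L -> Prop) a s :
  Fam R s -> Fam R (filter a s).
Proof.
elim: s => [|p s IH] //= H. case/Fam_consE: H => h1 h2.
by case: (a p); [constructor => //; apply: IH | apply: IH].
Qed.

Lemma Fam_cat {I : Type} (R : I -> L -> Prop) s1 s2 :
  Fam R s1 -> Fam R s2 -> Fam R (s1 ++ s2).
Proof. by move=> h1 h2; apply/List.Forall_app. Qed.

Lemma Fam_map {I J : Type} (R : I -> L -> Prop) (R' : J -> L -> Prop)
    (f : I * L -> J * L) s :
  (forall p, R p.1 p.2 -> R' (f p).1 (f p).2) -> Fam R s -> Fam R' (map f s).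
Proof.
move=> h; elim: s => [|p s IH] //= /Fam_consE [h1 h2].
by constructor; [apply: h | apply: IH].
Qed.

Lemma Fam_In {I : Type} (R : I -> L -> Prop) s :
  (forall p, List.In p s -> R p.1 p.2) -> Fam R s.
Proof. by move=> h; apply/List.Forall_forall. Qed.

Lemma sub_ssum (A : L -> Prop) {I : Type} (R : I -> L -> Prop) s :
  subspace A -> (forall i x, R i x -> A x) -> Fam R s -> A (ssum s).
Proof.
move=> sA h; elim: s => [|p s IH] /=; first by move=> _; apply: sub0.
by case/Fam_cons => h1 h2; apply: subD => //; [apply: (h p.1) | apply: IH].
Qed.

Lemma ssum_zero {I : Type} (s : seq (I * L)) :
  Fam (fun _ v => v = 0) s -> ssum s = 0.
Proof.
elim: s => [|p s IH] //= /Fam_consE [h1 h2].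
by rewrite h1 IH // addr0.
Qed.

Section Groups.
Variables (I : Type) (E : I -> I -> Prop).
Hypotheses (Erefl : forall i, E i i) (Esym : forall i j, E i j -> E j i)
  (Etrans : forall i j k, E i j -> E j k -> E i k).

Definition group (s : seq (I * L)) (j : I) : L :=
  ssum (filter (fun p => pb (E p.1 j)) s).

Fixpoint Dist (s : seq (I * L)) : Prop :=
  match s with
  | [::] => True
  | p :: s' => List.Forall (fun q => ~ E p.1 q.1) s' /\ Dist s'
  end.

Lemma group_cons p s j :
  group (p :: s) j = (if pb (E p.1 j) then p.2 else 0) + group s j.
Proof. by rewrite /group /=; case: pb => //=; rewrite add0r. Qed.

Lemma group_none s j :
  List.Forall (fun q => ~ E q.1 j) s -> group s j = 0.
Proof.
elim: s => [|p s IH] // h; inversion h; subst.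
by rewrite group_cons IH // pbF // add0r.
Qed.

Lemma group_const s p1 j : List.Forall (fun q => E q.1 p1) s ->
  group s j = if pb (E p1 j) then ssum s else 0.
Proof.
elim: s => [|q s IH] h; first by case: pb.
inversion h; subst; rewrite group_cons IH //=.
case: (pbP (E p1 j)) => hj.
  by rewrite pbT //; apply: Etrans hj.
rewrite pbF ?add0r //; move=> hqj; apply: hj; apply: Etrans hqj; exact: Esym.
Qed.

Lemma group_zero s j : Fam (fun _ v => v = 0) s -> group s j = 0.
Proof. by move=> h; apply: ssum_zero; apply: Fam_filter. Qed.

Lemma sum_groups0 t : Dist t -> (forall j, group t j = 0) -> ssum t = 0.
Proof.
elim: t => [|q t IH] //= [hq hd] hg.
have e0 : group t q.1 = 0.
  apply: group_none; apply: List.Forall_impl hq => r h1 h2; apply: h1; exact: Esym.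
have q0 : q.2 = 0 by have := hg q.1; rewrite group_cons pbT // e0 addr0.
rewrite q0 add0r IH // => j; have := hg j.
by rewrite group_cons q0; case: pb; rewrite add0r.
Qed.

Variable F : I -> L -> Prop.
Hypotheses (Fcompat : forall i j x, E i j -> F i x -> F j x)
  (FD : forall i x y, F i x -> F i y -> F i (x + y)).

Lemma regroup s : Fam F s -> exists t, Dist t /\ Fam F t /\ ssum t = ssum s /\
   (forall j, group t j = group s j) /\
   List.Forall (fun q => exists r, List.In r s /\ E q.1 r.1) t.
Proof.
have [n] := ubnP (size s); elim: n s => // n IH [|p s] /= Hsz HF.
  by exists [::]; do !split.
case/Fam_consE: HF => Fp Fs.
set a := fun q : I * L => pb (E q.1 p.1).
have szB : (size (filter (predC a) s) < n)%N.
  by rewrite size_filter; apply: leq_ltn_trans (count_size _ _) _; exact: Hsz.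
have [tB [dB [fB [sB [gB iB]]]]] := IH _ szB (Fam_filter _ Fs).
set As := filter a s.
have FAs : F p.1 (p.2 + ssum As).
  have : Fam F As by apply: Fam_filter.
  have : List.Forall (fun q => E q.1 p.1) As.
    by apply/List.Forall_forall => q /In_filterP [_ /pbP].
  elim: As => [|q As' IHA] /=; first by rewrite addr0.
  move=> hE hF; inversion hE; inversion hF; subst.
  rewrite addrCA; apply: FD; first by apply: Fcompat (_ : E q.1 p.1) _.
  by apply: IHA.
exists ((p.1, p.2 + ssum As) :: tB); split; [|split; [|split; [|split]]].
- split => //=; apply/List.Forall_forall => q hq.
  have [r [hr hqr]] := proj1 (List.Forall_forall _ _) iB q hq.
  move=> hpq; case/In_filterP: hr => _ /=; rewrite /a pbT //.
  by apply: Esym; apply: Etrans hpq hqr.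
- by constructor.
- by rewrite /= sB (ssum_filter a s) addrA.
- move=> j.
  have hA : group As j = if pb (E p.1 j) then ssum As else 0.
    apply: group_const; apply/List.Forall_forall => q /In_filterP [_ /pbP //].
  have hsplit : group s j = group As j + group (filter (predC a) s) j.
    rewrite /group /As (ssum_filter a).
    by rewrite [X in ssum X + _]filter_comm [X in _ + ssum X]filter_comm.
  have e1 : group ((p.1, p.2 + ssum As) :: tB) j =
     (if pb (E p.1 j) then p.2 + ssum As else 0) + group (filter (predC a) s) j.
    by rewrite group_cons gB.
  rewrite e1 group_cons hsplit hA.
  case: (pbP (E p.1 j)) => hj /=; first by rewrite addrA.
  by rewrite !add0r.
- constructor; first by exists p; split; [left|].
  apply: List.Forall_impl iB => q [r [hr hqr]]; exists r; split => //; right.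
  by case/In_filterP: hr.
Qed.

Lemma indep_groups :
  (forall t, Dist t -> Fam F t -> ssum t = 0 -> Fam (fun _ v => v = 0) t) ->
  forall s, Fam F s -> ssum s = 0 -> forall j, group s j = 0.
Proof.
move=> hI s hF hs j.
have [t [dt [ft [st [gt _]]]]] := regroup hF.
by rewrite -gt; apply: group_zero; apply: hI => //; rewrite st.
Qed.

Lemma sum_from_groups s : Fam F s -> (forall j, group s j = 0) -> ssum s = 0.
Proof.
move=> hF hg; have [t [dt [ft [st [gt _]]]]] := regroup hF.
by rewrite -st; apply: sum_groups0 => // j; rewrite gt.
Qed.

Lemma Dist_nth d t k l : Dist t -> (k < size t)%N -> (l < size t)%N -> k != l ->
  ~ E (nth d t k).1 (nth d t l).1.
Proof.
elim: t k l => [|q t IH] [|k] [|l] //= [hq hd] hk hl hkl.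
- move: hq => /List.Forall_forall h; apply: h; exact: In_nth.
- move: hq => /List.Forall_forall h he; apply: (h (nth d t k)).
    exact: In_nth.
  exact: Esym.
- exact: IH.
Qed.

End Groups.

Lemma Fam_nth {I : Type} (R : I -> L -> Prop) d s k :
  Fam R s -> (k < size s)%N -> R (nth d s k).1 (nth d s k).2.
Proof.
elim: s k => [|p s IH] [|k] //= /Fam_consE [h1 h2] hk.
  by []. exact: IH.
Qed.

Lemma ssum_nth {I : Type} (d : I * L) s : ssum s = \sum_(k < size s) (nth d s k).2.
Proof. by rewrite ssumE (big_nth d) big_mkord. Qed.

Lemma ord_ssum {I : Type} n (i : 'I_n -> I) (v : 'I_n -> L) :
  \sum_(k < n) v k = ssum (map (fun k => (i k, v k)) (enum 'I_n)).
Proof. by rewrite ssumE big_map big_enum. Qed.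

Lemma Fam_ord {I : Type} (R : I -> L -> Prop) n (i : 'I_n -> I) (v : 'I_n -> L) :
  (forall k, R (i k) (v k)) -> Fam R (map (fun k => (i k, v k)) (enum 'I_n)).
Proof. by move=> h; elim: (enum 'I_n) => [|k r IH] //=; constructor; [exact: h | exact: IH]. Qed.

Lemma fam_sum_seq {I : Type} (P : I -> Prop) (F : I -> L -> Prop) x :
  fam_sum P F x <-> exists s, Fam (fun i v => P i /\ F i v) s /\ x = ssum s.
Proof.
split.
  case=> n [i [v [h ->]]]; exists (map (fun k => (i k, v k)) (enum 'I_n)).
  by split; [apply: Fam_ord | apply: ord_ssum].
case=> s [hF ->]; case: s hF => [|p0 s] hF.
  have f0 : 'I_0 -> I by case=> m; rewrite ltn0.
  by exists 0%N, f0, (fun _ => 0); split => //=; [case | rewrite big_ord0].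
exists (size (p0 :: s)), (fun k => (nth p0 (p0 :: s) k).1),
  (fun k => (nth p0 (p0 :: s) k).2); split; last exact: ssum_nth.
by move=> k; apply: (Fam_nth (R := fun i v => P i /\ F i v)).
Qed.

End Gen.
Arguments subZ {K L} [A c x] _ _.

#[local] Hint Resolve Fam_nil : core.

Lemma lin_solve (K : fieldType) (L : lmodType K) (x y z : L) : x - y - z = 0 -> x = y + z.
Proof. by move=> h; apply/eqP; rewrite -subr_eq0 opprD addrA h. Qed.

Section Main.
Context (K : fieldType) (G : zmodType) (L : lmodType K)
  (Lg : G -> L -> Prop) (br : L -> L -> L) (phi psi : L -> L)
  (eps : G -> G -> K) (H : L -> Prop).
Hypotheses (hHLC : HomLieColor Lg br phi eps) (phiK : cancel phi psi)
  (psiK : cancel psi phi) (hH : max_abelian_subalgebra Lg br phi H)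
  (hsplit : split_alg Lg H br phi) (hsym : symmetric_roots Lg H br phi)
  (hZ : zero_annihilator br)
  (hLL : forall x, span_brackets br (fun _ _ => True) x).

Local Notation H0 := (H0 Lg H).
Local Notation eqH0 := (eqH0 Lg H).
Local Notation Lroot := (Lroot Lg H br phi).
Local Notation isRoot := (isRoot Lg H br phi).
Local Notation phin := (phin psi).

Lemma grsub g : subspace (Lg g).
Proof. by case: hHLC => [[h _] _]. Qed.
Lemma grdec x : fam_sum (fun _ => True) Lg x.
Proof. by case: hHLC => [[_ [h _]] _]. Qed.
Lemma grind : fam_indep (fun _ => True) Lg (fun g h => g = h).
Proof. by case: hHLC => [[_ [_ h]] _]. Qed.
Lemma eps_ne a b : eps a b != 0.
Proof. by case: hHLC => _ [[h _] _]. Qed.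
Lemma epsS a b : eps a b * eps b a = 1.
Proof. by case: hHLC => _ [[_ [h _]] _]. Qed.
Lemma epsDl a b c : eps (a + b) c = eps a c * eps b c.
Proof. by case: hHLC => _ [[_ [_ [_ h]]] _]. Qed.
Lemma brlin : bilinear_map br.
Proof. by case: hHLC => _ [_ [h _]]. Qed.
Lemma philin : linear_map phi.
Proof. by case: hHLC => _ [_ [_ [h _]]]. Qed.
Lemma br_gr g h x y : Lg g x -> Lg h y -> Lg (g + h) (br x y).
Proof. by case: hHLC => _ [_ [_ [_ [h' _]]]]; apply: h'. Qed.
Lemma phi_gr g x : Lg g x -> Lg g (phi x).
Proof. by case: hHLC => _ [_ [_ [_ [_ [h' _]]]]]; apply: h'. Qed.
Lemma phi_br x y : phi (br x y) = br (phi x) (phi y).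
Proof. by case: hHLC => _ [_ [_ [_ [_ [_ [h' _]]]]]]. Qed.
Lemma skew a b x y : Lg a x -> Lg b y -> br x y = - (eps a b *: br y x).
Proof. by case: hHLC => _ [_ [_ [_ [_ [_ [_ [h' _]]]]]]]; apply: h'. Qed.
Lemma jac a b c x y z : Lg a x -> Lg b y -> Lg c z ->
  eps c a *: br (phi x) (br y z) + eps a b *: br (phi y) (br z x)
    + eps b c *: br (phi z) (br x y) = 0.
Proof. by case: hHLC => _ [_ [_ [_ [_ [_ [_ [_ h']]]]]]]; apply: h'. Qed.

Lemma Hgsub : graded_subspace Lg H.
Proof. by case: hH => [[h _] _]. Qed.
Lemma Hsub : subspace H.
Proof. by case: Hgsub. Qed.
Lemma Hbr x y : H x -> H y -> H (br x y).
Proof. by case: hH => [[_ [h _]] _]; exact: h. Qed.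
Lemma Hphi x : H x -> H (phi x).
Proof. by case: hH => [[_ [_ [h _]]] _]; exact: h. Qed.
Lemma Hab x y : H x -> H y -> br x y = 0.
Proof. by case: hH => _ [h _]; exact: h. Qed.
Lemma Hpsi x : H x -> H (psi x).
Proof.
case: hH => [[_ [_ [_ h]]] _] hx; have [y [hy e]] := h x hx.
by rewrite -e phiK.
Qed.

Lemma eps0l c : eps 0 c = 1.
Proof.
have e := epsDl 0 0 c; rewrite addr0 in e.
have ne := eps_ne 0 c.
by apply: (mulfI ne); rewrite mulr1 -e.
Qed.
Lemma eps0r c : eps c 0 = 1.
Proof. by have := epsS c 0; rewrite eps0l mulr1. Qed.

Definition addf (f : L -> L) := forall x y, f (x + y) = f x + f y.
Lemma addf0 f : addf f -> f 0 = 0.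
Proof.
move=> h; have e := h 0 0; rewrite addr0 in e.
by apply: (addrI (f 0)); rewrite addr0 -e.
Qed.
Lemma addfN f x : addf f -> f (- x) = - f x.
Proof.
move=> h; apply/eqP; rewrite -subr_eq0 opprK -h.
by rewrite addNr addf0.
Qed.
Lemma addf_ssum f {I : Type} (s : seq (I * L)) : addf f ->
  f (ssum s) = ssum (map (fun p => (p.1, f p.2)) s).
Proof. by move=> h; symmetry; apply: ssum_map => //; apply: addf0. Qed.
Lemma addf_sum f n (F : 'I_n -> L) : addf f -> f (\sum_(k < n) F k) = \sum_(k < n) f (F k).
Proof. by move=> h; apply: (big_morph f h (addf0 h)). Qed.

Lemma brZl c x y : br (c *: x) y = c *: br x y.
Proof. by case: brlin => h _; have := h c x 0 y; rewrite addr0 => ->; rewrite (addf0 (f := br^~ y)) ?addr0 // => u v; case: brlin => h' _; have := h' 1 u v y; rewrite !scale1r. Qed.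
Lemma addf_brl y : addf (br^~ y).
Proof. by move=> u v; case: brlin => h _; have := h 1 u v y; rewrite !scale1r. Qed.
Lemma addf_brr x : addf (br x).
Proof. by move=> u v; case: brlin => _ h; have := h 1 u v x; rewrite !scale1r. Qed.
Lemma brZr c x y : br x (c *: y) = c *: br x y.
Proof.
case: brlin => _ h; have := h c y 0 x; rewrite addr0 => ->.
by rewrite (addf0 (addf_brr x)) addr0.
Qed.
Lemma br0l y : br 0 y = 0. Proof. exact: (addf0 (addf_brl y)). Qed.
Lemma br0r x : br x 0 = 0. Proof. exact: (addf0 (addf_brr x)). Qed.
Lemma brDl x x' y : br (x + x') y = br x y + br x' y. Proof. exact: addf_brl. Qed.
Lemma brDr x y y' : br x (y + y') = br x y + br x y'. Proof. exact: addf_brr. Qed.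
Lemma brNl x y : br (- x) y = - br x y. Proof. exact: (addfN _ (addf_brl y)). Qed.
Lemma brNr x y : br x (- y) = - br x y. Proof. exact: (addfN _ (addf_brr x)). Qed.

Lemma addf_phi : addf phi.
Proof. by move=> u v; have := philin 1 u v; rewrite !scale1r. Qed.
Lemma phiZ c x : phi (c *: x) = c *: phi x.
Proof. by have := philin c x 0; rewrite addr0 (addf0 addf_phi) addr0. Qed.
Lemma phi0 : phi 0 = 0. Proof. exact: addf0 addf_phi. Qed.
Lemma phi_inj : injective phi.
Proof. exact: can_inj phiK. Qed.
Lemma psilin : linear_map psi.
Proof. by move=> a x y; apply: phi_inj; rewrite philin !psiK. Qed.
Lemma addf_psi : addf psi.
Proof. by move=> u v; have := psilin 1 u v; rewrite !scale1r. Qed.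
Lemma psiZ c x : psi (c *: x) = c *: psi x.
Proof. by apply: phi_inj; rewrite phiZ !psiK. Qed.
Lemma psi0 : psi 0 = 0. Proof. exact: addf0 addf_psi. Qed.
Lemma psi_br x y : psi (br x y) = br (psi x) (psi y).
Proof. by apply: phi_inj; rewrite phi_br !psiK. Qed.

Lemma grseq x : exists s, Fam Lg s /\ x = ssum s.
Proof.
have [s [hs ->]] := (fam_sum_seq _ _ _).1 (grdec x).
by exists s; split => //; apply: Fam_impl hs => i v [].
Qed.

Lemma gr_indep t : Dist (fun g h => g = h) t -> Fam Lg t -> ssum t = 0 ->
  Fam (fun _ v => v = 0) t.
Proof.
case: t => [|p0 t0] // hD hF hs.
set t := p0 :: t0 in hD hF hs *.
have := @grind (size t) (fun k => (nth p0 t k).1) (fun k => (nth p0 t k).2).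
move=> h; apply: Fam_In => p hp.
have [k hk ->] : exists2 k, (k < size t)%N & p = nth p0 t k.
  elim: (t) hp => [|q r IH] //= [->|/IH [k hk ->]]; first by exists 0%N.
  by exists k.+1.
have h1 : forall l : 'I_(size t), True /\ Lg (nth p0 t l).1 (nth p0 t l).2.
  by move=> l; split => //; apply: Fam_nth.
have h2 : forall k' l' : 'I_(size t), k' != l' -> (nth p0 t k').1 <> (nth p0 t l').1.
  move=> k' l' hkl; apply: (Dist_nth (E := fun g h => g = h)) => //.
have h3 : \sum_(k < size t) (nth p0 t k).2 = 0 by rewrite -(ssum_nth p0).
exact: (h h1 h2 h3 (Ordinal hk)).
Qed.

Lemma gr_refl (i : G) : i = i. Proof. by []. Qed.
Lemma gr_sym (i j : G) : i = j -> j = i. Proof. by move=> ->. Qed.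
Lemma gr_trans (i j k : G) : i = j -> j = k -> i = k. Proof. by move=> -> ->. Qed.
Lemma gr_compat (i j : G) x : i = j -> Lg i x -> Lg j x. Proof. by move=> ->. Qed.
Lemma gr_D i x y : Lg i x -> Lg i y -> Lg i (x + y). Proof. exact: subD (grsub i). Qed.

Lemma group_self {I : Type} (E : I -> I -> Prop) (Erefl : forall i, E i i)
  (Esym : forall i j, E i j -> E j i) (t : seq (I * L)) q :
  Dist E t -> List.In q t -> group E t q.1 = q.2.
Proof.
elim: t => [|r t IH] //= [hr hd] [<-|hq].
  rewrite group_cons pbT // group_none ?addr0 //.
  by apply: List.Forall_impl hr => p h1 h2; apply: h1; apply: Esym.
rewrite group_cons pbF ?add0r; first exact: IH.
by move=> he; move: hr => /List.Forall_forall /(_ q hq); apply.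
Qed.

Lemma group_map {I : Type} (E : I -> I -> Prop) f s j : addf f ->
  group E (map (fun p => (p.1, f p.2)) s) j = f (group E s j).
Proof.
move=> hf; rewrite /group filter_map addf_ssum // -map_comp.
Qed.

Lemma hom_decomp (Idx : Type) (f : Idx -> L -> L) x :
  (forall i, addf (f i)) -> (forall i g v, Lg g v -> Lg g (f i v)) ->
  (forall i, f i x = 0) ->
  exists t, Fam (fun g v => Lg g v /\ forall i, f i v = 0) t /\ x = ssum t.
Proof.
move=> hadd hgr hx; have [s [hs ex]] := grseq x.
have hg : forall i j, f i (group (fun g h => g = h) s j) = 0.
  move=> i j; rewrite -group_map //.
  apply: (indep_groups gr_refl gr_sym gr_trans gr_compat gr_D gr_indep).
  - by apply: Fam_map hs => p /=; apply: hgr.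
  - by rewrite -addf_ssum // -ex hx.
have [t [dt [ft [st [gt _]]]]] := regroup gr_refl gr_sym gr_trans gr_compat gr_D hs.
exists t; split; last by rewrite st.
apply: Fam_In => q hq; split; first exact: Fam_in ft hq.
by move=> i; rewrite -(group_self _ gr_sym dt hq) // gt hg.
Qed.

Definition Hdec (P : L -> Prop) := forall x, P x ->
  exists t, Fam (fun g v => Lg g v /\ P v) t /\ x = ssum t.

Lemma Hdec_H : Hdec H.
Proof.
move=> x hx; case: Hgsub => _ /(_ x hx) /fam_sum_seq [s [hs ->]].
by exists s; split => //; apply: Fam_impl hs => i v [_ h].
Qed.

Lemma Hdec_T : Hdec (fun _ => True).
Proof.
move=> x _; have [s [hs ->]] := grseq x.
by exists s; split => //; apply: Fam_impl hs.
Qed.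

Lemma H0phi h : H0 h -> H0 (phi h).
Proof. by case=> h1 h2; split; [apply: Hphi | apply: phi_gr]. Qed.

Lemma gr_psi g x : Lg g x -> Lg g (psi x).
Proof.
move=> hx; have [s [hs e]] := grseq (psi x).
set s' := (g, - x) :: map (fun p => (p.1, phi p.2)) s.
have hF : Fam Lg s'.
  constructor; first by apply: subN (grsub g) _.
  by apply: Fam_map hs => p; apply: phi_gr.
have hS : ssum s' = 0.
  rewrite /= -addf_ssum; last exact: addf_phi.
  have -> : phi (ssum s) = x by rewrite -e psiK.
  by rewrite addNr.
have hgr := indep_groups gr_refl gr_sym gr_trans gr_compat gr_D gr_indep hF hS.
have hj : forall j, j <> g -> group (fun g h => g = h) s j = 0.
  move=> j hne; apply: phi_inj; rewrite phi0 -group_map; last exact: addf_phi.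
  have := hgr j; rewrite /s' group_cons pbF ?add0r //.
  by move=> he; apply: hne.
have -> : psi x = group (fun g h => g = h) s g + ssum (filter (predC (fun p => pb (p.1 = g))) s).
  by rewrite e (ssum_filter (fun p => pb (p.1 = g))).
rewrite (sum_from_groups gr_refl gr_sym gr_trans gr_compat gr_D (Fam_filter _ hs)) ?addr0.
  apply: (sub_ssum (grsub g) (R := fun i v => Lg i v /\ i = g)) => [i v [h <-] //|].
  apply: Fam_In => q /In_filterP [hq /pbP hqg]; split => //.
  exact: Fam_in hs hq.
move=> j; case: (pbP (j = g)) => hjg.
  rewrite /group -filter_predI; apply: ssum_zero; apply: Fam_In => q /In_filterP [_ /andP [/pbP h1 /negP h2]].
  by exfalso; apply: h2; apply/pbP; rewrite h1.
rewrite -(hj j hjg) /group filter_comm; congr ssum.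
apply/all_filterP; apply/allP => q; rewrite mem_filter => /andP [/pbP hq _] /=.
by apply/negP => /pbP hq'; apply: hjg; rewrite -hq -hq'.
Qed.


Lemma H0psi h : H0 h -> H0 (psi h).
Proof. by case=> h1 h2; split; [apply: Hpsi | apply: gr_psi]. Qed.
Lemma H0lin c h h' : H0 h -> H0 h' -> H0 (c *: h + h').
Proof.
case=> a1 a2 [b1 b2]; split; first by case: Hsub => _; apply.
by case: (grsub 0) => _; apply.
Qed.
Lemma H0_0 h : H0 h -> Lg 0 h. Proof. by case. Qed.
Lemma H0_H h : H0 h -> H h. Proof. by case. Qed.

Lemma Lroot_sub a : subspace (Lroot a).
Proof.
split; first by move=> h hh; rewrite br0r phi0 scaler0.
move=> c x y hx hy h hh; rewrite brDr brZr hx // hy // philin.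
by rewrite scalerDr !scalerA mulrC.
Qed.
Lemma Lroot_eq a b v : eqH0 a b -> Lroot a v -> Lroot b v.
Proof. by move=> e hv h hh; rewrite -e // hv. Qed.
Lemma Lroot_phi a v : Lroot a v -> Lroot (phin a 1) (phi v).
Proof.
move=> hv h hh; rewrite -{1}(psiK h) -phi_br hv; last exact: H0psi.
by rewrite phiZ.
Qed.
Lemma Lroot_psi a v : Lroot a v -> Lroot (fun h => a (phi h)) (psi v).
Proof.
move=> hv h hh; rewrite -{1}(phiK h) -psi_br hv; last exact: H0phi.
by rewrite psiZ phiK psiK.
Qed.
Lemma Lroot_H x : H x -> Lroot (fun _ => 0) x.
Proof. by move=> hx h hh; rewrite Hab ?scale0r //; apply: H0_H. Qed.

Lemma Hdec_Lroot a : Hdec (Lroot a).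
Proof.
move=> x hx.
pose f (h : {h | H0 h}) (v : L) := br (sval h) v - a (sval h) *: phi v.
have := hom_decomp (f := f) (x := x).
case.
- move=> [h hh] u v; rewrite /f /= brDr addf_phi scalerDr opprD.
  by rewrite addrACA.
- move=> [h hh] g v hv; rewrite /f /=; apply: subB (grsub g) _ _.
    by have := br_gr (H0_0 hh) hv; rewrite add0r.
  by apply: subZ (grsub g) _; apply: phi_gr.
- by move=> [h hh]; rewrite /f /= hx // subrr.
move=> t [ht ->]; exists t; split => //; apply: Fam_impl ht => g v [h1 h2].
split => // h hh; have := h2 (exist _ h hh); rewrite /f /=.
by move/eqP; rewrite subr_eq0 => /eqP.
Qed.

Lemma hom2 (S P Q : L -> Prop) : subspace S -> Hdec P -> Hdec Q ->
  (forall g g' x y, Lg g x -> P x -> Lg g' y -> Q y -> S (br x y)) ->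
  forall x y, P x -> Q y -> S (br x y).
Proof.
move=> sS dP dQ h x y px qy.
have inner : forall g x, Lg g x -> P x -> S (br x y).
  move=> g x' gx px'; have [t [ht ->]] := dQ y qy.
  rewrite (addf_ssum _ (addf_brr x')).
  apply: (sub_ssum sS (R := fun _ z => S z)) => //.
  by apply: Fam_map ht => p [h1 h2] /=; apply: h gx px' h1 h2.
have [t [ht ->]] := dP x px.
rewrite (addf_ssum _ (addf_brl y)).
apply: (sub_ssum sS (R := fun _ z => S z)) => //.
by apply: Fam_map ht => p [h1 h2] /=; apply: inner h1 h2.
Qed.

Lemma W4h a b u w g g' : Lg g u -> Lroot a u -> Lg g' w -> Lroot b w ->
  Lroot (fun h => a (psi h) + b (psi h)) (br u w).
Proof.
move=> gu ru gw rw h hh.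
have hh' := H0psi hh; have hg0 := H0_0 hh'.
set h' := psi h in hh' hg0 *.
have eh : h = phi h' by rewrite /h' psiK.
have J := jac hg0 gu gw.
rewrite eps0r eps0l !scale1r in J.
have e1 : br w h' = - (b h' *: phi w) by rewrite (skew gw hg0) eps0r scale1r rw.
have e2 : br h' u = a h' *: phi u by rewrite ru.
rewrite e1 e2 brNr !brZr in J.
have e3 : br (phi w) (phi u) = - (eps g' g *: br (phi u) (phi w)).
  exact: skew (phi_gr gw) (phi_gr gu).
rewrite e3 !scalerN !scalerA mulrAC epsS mul1r in J.
by rewrite {1}eh (lin_solve J) phi_br scalerDl addrC.
Qed.

Lemma W4 a b u w : Lroot a u -> Lroot b w ->
  Lroot (fun h => a (psi h) + b (psi h)) (br u w).
Proof.
apply: hom2; [exact: Lroot_sub | exact: Hdec_Lroot | exact: Hdec_Lroot |].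
by move=> g g' x y gx px gy py; exact: (W4h gx px gy py).
Qed.

Lemma eqH0_refl a : eqH0 a a. Proof. by []. Qed.
Lemma eqH0_sym a b : eqH0 a b -> eqH0 b a. Proof. by move=> e h hh; rewrite e. Qed.
Lemma eqH0_trans a b c : eqH0 a b -> eqH0 b c -> eqH0 a c.
Proof. by move=> e1 e2 h hh; rewrite e1 // e2. Qed.

Lemma isRoot_eq a b : eqH0 a b -> isRoot a -> isRoot b.
Proof.
move=> e [l [[h [hh nz]] [v [nv hv]]]]; split; [|split].
- by move=> c x y hx hy; rewrite -!e ?l //; apply: H0lin.
- by exists h; split => //; rewrite -e.
- by exists v; split => //; apply: Lroot_eq hv.
Qed.

Lemma isRoot_psi a : isRoot a -> isRoot (phin a 1).
Proof.
move=> [l [[h [hh nz]] [v [nv hv]]]]; split; [|split].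
- move=> c x y hx hy; rewrite /phin /= psilin l //; exact: H0psi.
- by exists (phi h); split; [apply: H0phi | rewrite /phin /= phiK].
- exists (phi v); split; last exact: Lroot_phi.
  by apply: contra nv => /eqP e; apply/eqP; apply: phi_inj; rewrite e phi0.
Qed.

Lemma isRoot_phi a : isRoot a -> isRoot (fun h => a (phi h)).
Proof.
move=> [l [[h [hh nz]] [v [nv hv]]]]; split; [|split].
- move=> c x y hx hy; rewrite philin l //; exact: H0phi.
- by exists (psi h); split; [apply: H0psi | rewrite psiK].
- exists (psi v); split; last exact: Lroot_psi.
  by apply: contra nv => /eqP e; apply/eqP; apply: (can_inj psiK); rewrite e psi0.
Qed.

Lemma phinS a n : eqH0 (phin a n.+1) (phin (phin a n) 1).
Proof. by move=> h _; rewrite /phin iterSr. Qed.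

Lemma isRoot_phin a n : isRoot a -> isRoot (phin a n).
Proof.
move=> ha; elim: n => [|n IH]; first by apply: isRoot_eq ha => h _.
by apply: isRoot_eq (eqH0_sym (phinS a n)) _; apply: isRoot_psi.
Qed.

Lemma isRoot_opp a : isRoot a -> isRoot (oppf a).
Proof. exact: hsym. Qed.


Lemma In_nth_ex {T : Type} (d : T) (t : seq T) p : List.In p t ->
  exists2 k, (k < size t)%N & p = nth d t k.
Proof.
elim: t => [|q r IH] //= [->|/IH [k hk ->]]; first by exists 0%N.
by exists k.+1.
Qed.

Definition RF (a : L -> K) (v : L) := isRoot a /\ Lroot a v.
Lemma RF_compat i j x : eqH0 i j -> RF i x -> RF j x.
Proof. by move=> e [h1 h2]; split; [apply: isRoot_eq e h1 | apply: Lroot_eq e h2]. Qed.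
Lemma RF_D i x y : RF i x -> RF i y -> RF i (x + y).
Proof. by move=> [h1 h2] [_ h3]; split => //; apply: subD (Lroot_sub i) _ _. Qed.

Definition d0 : (L -> K) * L := (fun _ => 0, 0).

Lemma RI h s : H h -> Fam RF s -> h + ssum s = 0 ->
  h = 0 /\ forall j, group eqH0 s j = 0.
Proof.
move=> hh hs e.
have [t [dt [ft [st [gt _]]]]] := regroup eqH0_refl eqH0_sym eqH0_trans RF_compat RF_D hs.
have := hsplit.2 (size t) h (fun k => (nth d0 t k).1) (fun k => (nth d0 t k).2) hh.
case.
- by move=> k; apply: (Fam_nth (R := RF)).
- move=> k l hkl; apply: (Dist_nth (E := eqH0)) => //; exact: eqH0_sym.
- by rewrite -(ssum_nth d0) st.
move=> -> hz; split => // j; rewrite -gt; apply: group_zero.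
apply: Fam_In => p /(In_nth_ex d0) [k hk ->].
exact: (hz (Ordinal hk)).
Qed.

Lemma ssum_eq_in {I J : Type} (f g : I * L -> J * L) (l : seq (I * L)) :
  (forall p, List.In p l -> (f p).2 = (g p).2) -> ssum (map f l) = ssum (map g l).
Proof.
elim: l => [|p l IH] //= h; rewrite h; last by left.
by rewrite IH // => q hq; apply: h; right.
Qed.

Lemma split_seq x : exists h s, H h /\ Fam RF s /\ x = h + ssum s.
Proof.
have [h [v [hh [hv ->]]]] := hsplit.1 x.
have [s [hs ->]] := (fam_sum_seq _ _ _).1 hv.
by exists h, s.
Qed.

Lemma Z1 x : Lroot (fun _ => 0) x -> H x.
Proof.
move=> hx; have [h [s [hh [hs ex]]]] := split_seq x.
suff : ssum s = 0 by move=> e; rewrite ex e addr0.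
apply: (sum_from_groups eqH0_refl eqH0_sym eqH0_trans RF_compat RF_D hs) => j.
case: (classic (isRoot j)) => hj; last first.
  apply: group_none; apply/List.Forall_forall => p hp he; apply: hj.
  by apply: isRoot_eq he _; case: (Fam_in hs hp).
have [_ [[h0 [hh0 nz]] _]] := hj.
suff : j h0 *: phi (group eqH0 s j) = 0.
  move/eqP; rewrite scaler_eq0 (negbTE nz) /= => /eqP e.
  by apply: phi_inj; rewrite e phi0.
pose s' := map (fun p : (L -> K) * L => (phin p.1 1, p.1 h0 *: phi p.2)) s.
have hs' : Fam RF s'.
  apply: Fam_map hs => p [r1 r2] /=; split; first exact: isRoot_psi.
  by apply: subZ (Lroot_sub _) _; apply: Lroot_phi.
have e' : 0 + ssum s' = 0.
  rewrite add0r; transitivity (br h0 x); last by rewrite hx // scale0r.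
  rewrite ex brDr Hab ?add0r; [|exact: H0_H|exact: hh].
  rewrite (addf_ssum _ (addf_brr h0)); apply: ssum_eq_in => p hp /=.
  by case: (Fam_in hs hp) => _ ->.
have := (RI (Hsub.1) hs' e').2 (phin j 1).
rewrite /group /s' filter_map.
have -> : [seq x <- s | preim (fun p : (L -> K) * L => (phin p.1 1, p.1 h0 *: phi p.2))
             (fun p => pb (eqH0 p.1 (phin j 1))) x] =
          [seq x <- s | pb (eqH0 x.1 j)].
  apply: eq_filter => p /=; apply/pbP/pbP => e.
    by move=> h1 hh1; have := e (phi h1) (H0phi hh1); rewrite /phin /= phiK.
  by move=> h1 hh1; rewrite /phin /= e //; apply: H0psi.
rewrite (ssum_eq_in (g := fun p => (p.1, j h0 *: phi p.2))).
  have ha : addf (fun v => j h0 *: phi v) by move=> u v; rewrite addf_phi scalerDr.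
  by move=> e; rewrite -e; exact: (addf_ssum _ ha).
move=> p /In_filterP [hp /pbP e] /=; by rewrite e.
Qed.

Lemma KB a b u w : isRoot a -> isRoot b -> Lroot a u -> Lroot b w ->
  br u w = 0 \/
  (eqH0 (fun h => a h + b h) (fun _ => 0) /\ H (br u w)) \/
  (isRoot (fun h => a (psi h) + b (psi h)) /\
   Lroot (fun h => a (psi h) + b (psi h)) (br u w)).
Proof.
move=> ra rb hu hw; have hc := W4 hu hw.
case: (classic (eqH0 (fun h => a h + b h) (fun _ => 0))) => hab.
  right; left; split => //; apply: Z1; apply: Lroot_eq hc.
  by move=> h hh; apply: hab; apply: H0psi.
case: (classic (br u w = 0)) => hz; [by left | right; right; split => //].
case: ra => la _; case: rb => lb _.
split; [|split].
- move=> c x y hx hy; rewrite psilin la ?lb; try exact: H0psi.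
  by rewrite mulrDr addrACA.
- apply: NNPP => hn; apply: hab => h hh; apply: NNPP => hne; apply: hn.
  by exists (phi h); split; [apply: H0phi | rewrite phiK; apply/eqP].
- by exists (br u w); split => //; apply/eqP.
Qed.


Lemma H0_iter n h : H0 h -> H0 (iter n psi h).
Proof. by move=> hh; elim: n => [|n IH] //=; apply: H0psi. Qed.

Lemma phin_psi a n h : phin a n (psi h) = phin a n.+1 h.
Proof. by rewrite /phin iterSr. Qed.
Lemma phin_psi' a n h : a (psi (iter n psi h)) = phin a n.+1 h.
Proof. by rewrite /phin iterS. Qed.

Lemma phin_eq a b n : eqH0 a b -> eqH0 (phin a n) (phin b n).
Proof. by move=> e h hh; rewrite /phin e //; apply: H0_iter. Qed.
Lemma phin_add a n m : eqH0 (phin (phin a n) m) (phin a (n + m)).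
Proof. by move=> h hh; rewrite /phin iterD. Qed.

Definition sgn (b : bool) (f : L -> K) : L -> K := if b then oppf f else f.
Lemma sgn_eq b f g : eqH0 f g -> eqH0 (sgn b f) (sgn b g).
Proof. by case: b => e h hh //=; rewrite /oppf e. Qed.
Lemma sgn_sgn b1 b2 f : eqH0 (sgn b1 (sgn b2 f)) (sgn (b1 (+) b2) f).
Proof. by case: b1; case: b2 => h hh //=; rewrite /oppf opprK. Qed.
Lemma phin_sgn b f n : eqH0 (phin (sgn b f) n) (sgn b (phin f n)).
Proof. by case: b. Qed.
Lemma isRoot_sgn b f : isRoot f -> isRoot (sgn b f).
Proof. by case: b => //; apply: isRoot_opp. Qed.

Inductive Reach : (L -> K) -> (L -> K) -> Prop :=
| R_refl S T : eqH0 S T -> Reach S T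
| R_step S T T' c : Reach S T -> isRoot c -> isRoot T' ->
    eqH0 T' (fun h => T (psi h) + c (psi h)) -> Reach S T'.

Lemma Reach_root S T : isRoot S -> Reach S T -> isRoot T.
Proof. by move=> hS r; elim: r hS => [S0 T0 e hS|//]; apply: isRoot_eq e hS. Qed.

Lemma Reach_eqr S T T' : Reach S T -> eqH0 T T' -> Reach S T'.
Proof.
case=> [S0 T0 e e'|S0 T0 T1 c r hc hT1 e e'].
  by apply: R_refl; apply: eqH0_trans e e'.
apply: R_step r hc _ _; first exact: isRoot_eq e' hT1.
exact: eqH0_trans (eqH0_sym e') e.
Qed.

Lemma Reach_eql S S' T : eqH0 S' S -> Reach S T -> Reach S' T.
Proof.
move=> e r; elim: r S' e => [S0 T0 e0 S' e|S0 T0 T1 c r IH hc hT1 e1 S' e].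
  by apply: R_refl; apply: eqH0_trans e e0.
exact: R_step (IH S' e) hc hT1 e1.
Qed.

Lemma Reach_trans S T U : Reach S T -> Reach T U -> Reach S U.
Proof.
move=> r1 r2; elim: r2 r1 => [T0 U0 e r1|T0 U0 U1 c r IH hc hU e r1].
  exact: Reach_eqr r1 e.
exact: R_step (IH r1) hc hU e.
Qed.

Lemma Reach_shift S T u : Reach S T -> Reach (phin S u) (phin T u).
Proof.
elim => [S0 T0 e|S0 T0 T1 c r IH hc hT1 e].
  by apply: R_refl; apply: phin_eq.
apply: R_step IH (isRoot_phin u hc) (isRoot_phin u hT1) _.
move=> h hh; rewrite /phin e; last exact: H0_iter. have E : psi (iter u psi h) = iter u psi (psi h) by rewrite -iterS iterSr.
by rewrite E.
Qed.

Lemma Reach_sgn b S T : Reach S T -> Reach (sgn b S) (sgn b T).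
Proof.
elim => [S0 T0 e|S0 T0 T1 c r IH hc hT1 e].
  by apply: R_refl; apply: sgn_eq.
apply: R_step IH (isRoot_sgn b hc) (isRoot_sgn b hT1) _.
case: b => h hh /=; rewrite /oppf e // ?opprD //.
Qed.

Lemma Reach_rev S T : isRoot S -> Reach S T ->
  forall u, exists v, Reach (phin T u) (phin S v).
Proof.
move=> hS r; elim: r hS => [S0 T0 e|S0 T0 T1 c r IH hc hT1 e] hS u.
  by exists u; apply: R_refl; apply: phin_eq; apply: eqH0_sym.
have [v hv] := IH hS u.+2; exists v.
apply: Reach_trans hv.
have hT0 := Reach_root hS r.
apply: (R_step (T := phin T1 u) (c := oppf (phin c u.+1))).
- exact: R_refl.
- by apply: isRoot_opp; apply: isRoot_phin.
- exact: isRoot_phin.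
- move=> h hh; rewrite /oppf !phin_psi.
  have E1 : phin T1 u.+1 h = phin T0 u.+2 h + phin c u.+2 h.
    by rewrite {1}/phin e ?phin_psi' //; apply: H0_iter.
  by rewrite E1 addrK.
Qed.

Definition Conn (al be : L -> K) : Prop :=
  exists S T n m (b : bool), isRoot S /\ eqH0 S (phin al n) /\ Reach S T /\
    eqH0 T (sgn b (phin be m)).

Lemma Conn_refl a : isRoot a -> Conn a a.
Proof. by move=> ha; exists a, a, 0%N, 0%N, false; refine (conj _ (conj _ (conj _ _))) => //; apply: R_refl. Qed.

Lemma Conn_sym a b : Conn a b -> Conn b a.
Proof.
case=> S [T [n [m [sg [hS [eS [r eT]]]]]]].
have [v hv] := Reach_rev hS r 0.
have hT := Reach_root hS r.
exists (sgn sg T), (sgn sg (phin S v)), m, (v + n)%N, sg; split; [|split; [|split]].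
- exact: isRoot_sgn.
- apply: eqH0_trans (sgn_eq sg eT) _.
  by apply: eqH0_trans (sgn_sgn _ _ _) _; rewrite addbb.
- apply: Reach_sgn; apply: Reach_eql hv => h hh //.
- apply: sgn_eq; apply: eqH0_trans (phin_eq v eS) _.
  by move=> h hh; rewrite /phin -iterD addnC.
Qed.

Lemma Conn_trans a b c : Conn a b -> Conn b c -> Conn a c.
Proof.
case=> S1 [T1 [n1 [m1 [s1 [hS1 [eS1 [r1 eT1]]]]]]].
case=> S2 [T2 [n2 [m2 [s2 [hS2 [eS2 [r2 eT2]]]]]]].
exists (phin S1 n2), (sgn s1 (phin T2 m1)), (n1 + n2)%N, (m2 + m1)%N, (s1 (+) s2).
split; [|split; [|split]].
- exact: isRoot_phin.
- by apply: eqH0_trans (phin_eq n2 eS1) _; apply: phin_add.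
- apply: Reach_trans (Reach_shift n2 r1) _.
  apply: Reach_eql (Reach_sgn s1 (Reach_shift m1 r2)).
  apply: eqH0_trans (phin_eq n2 eT1) _.
  apply: eqH0_trans (phin_sgn _ _ _) _; apply: sgn_eq.
  apply: eqH0_trans (phin_add _ _ _) _; apply: eqH0_sym.
  apply: eqH0_trans (phin_eq m1 eS2) _.
  by apply: eqH0_trans (phin_add _ _ _) _; rewrite addnC.
- apply: eqH0_trans (sgn_eq s1 (phin_eq m1 eT2)) _.
  apply: eqH0_trans (sgn_eq s1 (phin_sgn _ _ _)) _.
  apply: eqH0_trans (sgn_sgn _ _ _) _; apply: sgn_eq; exact: phin_add.
Qed.

Lemma Conn_eql a a' b : eqH0 a a' -> Conn a b -> Conn a' b.
Proof.
move=> e [S [T [n [m [sg [hS [eS rest]]]]]]].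
exists S, T, n, m, sg; split => //; split => //.
exact: eqH0_trans eS (phin_eq n e).
Qed.

Lemma Conn_eqr a b b' : eqH0 b b' -> Conn a b -> Conn a b'.
Proof.
move=> e [S [T [n [m [sg [hS [eS [r eT]]]]]]]].
exists S, T, n, m, sg; do 3!split => //.
exact: eqH0_trans eT (sgn_eq sg (phin_eq m e)).
Qed.

Lemma Conn_psi a : isRoot a -> Conn (phin a 1) a.
Proof.
move=> ha; exists (phin a 1), (phin a 1), 0%N, 1%N, false.
refine (conj _ (conj _ (conj _ _))) => //; [exact: isRoot_psi | exact: R_refl].
Qed.

Lemma Conn_phi a : isRoot a -> Conn (fun h => a (phi h)) a.
Proof.
move=> ha; exists a, a, 1%N, 0%N, false.
refine (conj _ (conj _ (conj _ _))) => //; last exact: R_refl.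
by move=> h hh; rewrite /phin /= psiK.
Qed.

Lemma Conn_opp a : isRoot a -> Conn a (oppf a).
Proof.
move=> ha; exists a, a, 0%N, 0%N, true.
refine (conj _ (conj _ (conj _ _))) => //; first exact: R_refl.
by move=> h hh; rewrite /= /oppf /phin /= opprK.
Qed.

Lemma Conn_sum a b : isRoot a -> isRoot b ->
  isRoot (fun h => a (psi h) + b (psi h)) -> Conn a (fun h => a (psi h) + b (psi h)).
Proof.
move=> ha hb hc; exists a, (fun h => a (psi h) + b (psi h)), 0%N, 0%N, false.
refine (conj _ (conj _ (conj _ _))) => //.
by apply: R_step (R_refl (eqH0_refl a)) hb hc _.
Qed.


Local Notation Ssum := (Ssum psi).
Local Notation connected := (connected Lg H br phi psi).

Lemma Ssum0 (a : nat -> L -> K) h : Ssum a 0 h = a 1%N h.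
Proof. by rewrite /Ssum big_geq // addr0. Qed.

Lemma SsumS (a : nat -> L -> K) i h :
  Ssum a i.+1 h = Ssum a i (psi h) + a i.+2 (psi h).
Proof.
rewrite /Ssum big_nat_recr //= subSnn.
rewrite (phin_psi (a 1%N)) -!addrA; congr (_ + _).
congr (_ + _); apply: eq_big_nat => j /andP [_ hj].
by rewrite phin_psi subSn // ltnW.
Qed.

Lemma conn_to_Conn al be : isRoot be -> connected al be -> Conn al be.
Proof.
move=> hb [k [a [hk [ha [[n hn] [hi [m hm]]]]]]].
have hfin : isRoot (Ssum a (k - 1)).
  by case: hm => e; [apply: isRoot_eq (eqH0_sym e) (isRoot_phin m hb) |
    apply: isRoot_eq (eqH0_sym e) (isRoot_phin m (isRoot_opp hb))].
have reach : forall i, (i <= k - 1)%N -> Reach (a 1%N) (Ssum a i).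
  elim => [|i IH] hi'.
    by apply: R_refl => h _; rewrite Ssum0.
  apply: (R_step (IH (ltnW hi')) (ha i.+2 _)).
  - by apply/andP; split => //; lia.
  - case: (leqP i.+1 (k - 2)) => hh; first by apply: hi; apply/andP.
    by have -> : i.+1 = (k - 1)%N by lia.
  - by move=> h _; rewrite SsumS.
have ha1 : isRoot (a 1%N) by apply: ha; apply/andP.
case: hm => e.
  by exists (a 1%N), (Ssum a (k - 1)), n, m, false; split => //; split => //; split => //; apply: reach.
exists (a 1%N), (Ssum a (k - 1)), n, m, true; split => //; split => //; split => //.
exact: reach.
Qed.

Lemma Reach_chain S T : isRoot S -> Reach S T ->
  exists k (a : nat -> L -> K), (1 <= k)%N /\ (forall j, (1 <= j <= k)%N -> isRoot (a j)) /\
    a 1%N = S /\ (forall i, (1 <= i <= k - 2)%N -> isRoot (Ssum a i)) /\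
    eqH0 (Ssum a (k - 1)) T.
Proof.
move=> hS r; elim: r hS => [S0 T0 e|S0 T0 T1 c r IH hc hT1 e] hS.
  exists 1%N, (fun _ => S0); split => //; split => //; split => //; split.
    by move=> i /andP [h1 h2]; exfalso; lia.
  by move=> h hh; rewrite Ssum0 e.
have [k [a [hk [ha [a1 [hi hT]]]]]] := IH hS.
have hT0 := Reach_root hS r.
pose a' := fun j => if j == k.+1 then c else a j.
have same : forall i, (i <= k - 1)%N -> forall h, Ssum a' i h = Ssum a i h.
  elim => [|i IHi] hi' h; first by rewrite !Ssum0 /a' ifN //; lia.
  rewrite !SsumS IHi; last by lia.
  by rewrite /a' ifN //; lia.
exists k.+1, a'; split => //; split; [|split; [|split]].
- move=> j /andP [h1 h2]; rewrite /a'; case: eqP => // hne.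
  by apply: ha; apply/andP; split => //; lia.
- by rewrite /a' ifN //; lia.
- move=> i /andP [h1 h2].
  case: (leqP i (k - 2)) => hh.
    apply: isRoot_eq (hi i _); last by apply/andP.
    by move=> h _; rewrite same //; lia.
  have -> : i = (k - 1)%N by lia.
  apply: isRoot_eq hT0; apply: eqH0_sym; apply: eqH0_trans hT.
  by move=> h _; rewrite same.
- have ek : (k.+1 - 1)%N = (k - 1).+1 by lia.
  move=> h hh; rewrite ek SsumS same // hT; last exact: H0psi.
  have -> : (k - 1).+2 = k.+1 by lia.
  by rewrite /a' eqxx e.
Qed.

Lemma Conn_to_conn al be : Conn al be -> connected al be.
Proof.
case=> S [T [n [m [sg [hS [eS [r eT]]]]]]].
have [k [a [hk [ha [a1 [hi hT]]]]]] := Reach_chain hS r.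
exists k, a; split => //; split => //; split; first by exists n; rewrite a1.
split => //; exists m; case: sg eT => eT; [right | left];
  exact: eqH0_trans hT eT.
Qed.


Local Notation LambdaClass := (LambdaClass Lg H br phi psi).
Local Notation HLambda := (HLambda Lg H br phi psi).
Local Notation VLambda := (VLambda Lg H br phi psi).
Local Notation Iclass := (Iclass Lg H br phi psi).

Lemma LC_iff al b : isRoot al -> (LambdaClass al b <-> isRoot b /\ Conn b al).
Proof.
move=> ha; split; case=> hb hc; split => //; first exact: conn_to_Conn.
exact: Conn_to_conn.
Qed.

Lemma fam_sum_sub {I : Type} (P : I -> Prop) (F : I -> L -> Prop) :
  (forall i c v, P i -> F i v -> F i (c *: v)) -> subspace (fam_sum P F).
Proof.
move=> hZ'; split.
  by apply/fam_sum_seq; exists [::]; split.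
move=> a x y /fam_sum_seq [s1 [h1 ->]] /fam_sum_seq [s2 [h2 ->]].
apply/fam_sum_seq; exists (map (fun p => (p.1, a *: p.2)) s1 ++ s2); split.
  apply: Fam_cat h2; apply: Fam_map h1 => p [hp hf]; split => //; exact: hZ'.
have ha : addf (fun v => a *: v) by move=> u v; rewrite scalerDr.
by rewrite ssum_cat (addf_ssum _ ha).
Qed.

Lemma fam_ind {I : Type} (P : I -> Prop) (F : I -> L -> Prop) (S : L -> Prop) x :
  subspace S -> (forall i v, P i -> F i v -> S v) -> fam_sum P F x -> S x.
Proof.
move=> sS h /fam_sum_seq [s [hs ->]].
apply: (sub_ssum sS (R := fun i v => P i /\ F i v)) => // i v [hp hf]; exact: (h i v hp hf).
Qed.

Lemma fam1 {I : Type} (P : I -> Prop) (F : I -> L -> Prop) i v :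
  P i -> F i v -> fam_sum P F v.
Proof.
move=> hp hf; apply/fam_sum_seq; exists [:: (i, v)]; split; last by rewrite /= addr0.
by constructor.
Qed.

Definition Gen (Q : L -> L -> Prop) (_ : unit) (v : L) :=
  exists c u w, Q u w /\ v = c *: br u w.

Lemma span_fam Q x : span_brackets br Q x <-> fam_sum (fun _ => True) (Gen Q) x.
Proof.
split.
  case=> n [c [u [w [hq ->]]]]; exists n, (fun _ => tt), (fun k => c k *: br (u k) (w k)).
  by split => // k; split => //; exists (c k), (u k), (w k).
case=> n [i [v [hv ->]]].
have hk : forall k, {p : K * L * L | Q p.1.2 p.2 /\ v k = p.1.1 *: br p.1.2 p.2}.
  move=> k; apply: constructive_indefinite_description.
  have [_ [c [u [w [h1 h2]]]]] := hv k; by exists (c, u, w).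
exists n, (fun k => (sval (hk k)).1.1), (fun k => (sval (hk k)).1.2),
  (fun k => (sval (hk k)).2); split; first by move=> k; case: (svalP (hk k)).
by apply: eq_bigr => k _; case: (svalP (hk k)).
Qed.

Lemma span_sub Q : subspace (span_brackets br Q).
Proof.
apply: sub_eqv (fun x => iff_sym (span_fam Q x)) _.
apply: fam_sum_sub => i c v _ [c' [u [w [hq ->]]]].
by exists (c * c'), u, w; split => //; rewrite scalerA.
Qed.

Lemma span_ind Q (S : L -> Prop) x : subspace S ->
  (forall c u w, Q u w -> S (c *: br u w)) -> span_brackets br Q x -> S x.
Proof.
move=> sS h [n [c [u [w [hq ->]]]]]; apply: sub_sum_ord => // k; exact: h.
Qed.

Lemma preim_sub (S : L -> Prop) (f : L -> L) : subspace S -> addf f ->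
  (forall c x, f (c *: x) = c *: f x) -> subspace (fun x => S (f x)).
Proof.
move=> sS ha hz; split; first by rewrite addf0 //; apply: sub0.
by move=> c x y h1 h2; rewrite ha hz; apply: (subD sS (subZ sS h1) h2).
Qed.

Lemma zero_sub : subspace (fun v : L => v = 0).
Proof. by split => // c x y -> ->; rewrite scaler0 addr0. Qed.

Lemma HL_sub al : subspace (HLambda al). Proof. exact: span_sub. Qed.
Lemma VL_sub al : subspace (VLambda al).
Proof. by apply: fam_sum_sub => i c v _; apply: subZ (Lroot_sub i). Qed.

Lemma I_sub al : subspace (Iclass al).
Proof.
split; first by exists 0, 0; split; [apply: sub0 (HL_sub al) | split; [apply: sub0 (VL_sub al)|rewrite addr0]].
move=> c x y [h1 [v1 [hh1 [hv1 ->]]]] [h2 [v2 [hh2 [hv2 ->]]]].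
exists (c *: h1 + h2), (c *: v1 + v2); split; first by case: (HL_sub al) => _; apply.
split; first by case: (VL_sub al) => _; apply.
by rewrite scalerDr addrACA.
Qed.

Lemma I_V al a v : LambdaClass al a -> Lroot a v -> Iclass al v.
Proof.
move=> ha hv; exists 0, v; split; first exact: sub0 (HL_sub al).
by split; [apply: fam1 ha hv | rewrite add0r].
Qed.

Lemma I_H al b u w : LambdaClass al b -> Lroot b u -> Lroot (oppf b) w ->
  Iclass al (br u w).
Proof.
move=> hb hu hw; exists (br u w), 0; split; last first.
  by split; [apply: sub0 (VL_sub al) | rewrite addr0].
exists 1%N, (fun _ => 1), (fun _ => u), (fun _ => w); split.
  by move=> _; exists b.
by rewrite big_ord1 scale1r.
Qed.

Lemma HL_H al x : HLambda al x -> H x.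
Proof.
apply: span_ind; first exact: Hsub.
move=> c u w [b [_ [hu hw]]]; apply: subZ Hsub _; apply: Z1.
apply: Lroot_eq (W4 hu hw) => h hh; by rewrite /oppf addrN.
Qed.


Lemma jac3 (S : L -> Prop) g1 g2 g3 x y z : subspace S ->
  Lg g1 x -> Lg g2 y -> Lg g3 z ->
  S (br (phi y) (br z x)) -> S (br (phi z) (br x y)) -> S (br (phi x) (br y z)).
Proof.
move=> sS gx gy gz h2 h3; have J := jac gx gy gz.
have J' : eps g3 g1 *: br (phi x) (br y z) =
   - (eps g1 g2 *: br (phi y) (br z x) + eps g2 g3 *: br (phi z) (br x y)).
  by apply/eqP; rewrite -subr_eq0 opprK addrA J.
rewrite -[br (phi x) _]scale1r -(mulVf (eps_ne g3 g1)) -scalerA J'.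
apply: (subZ sS); apply: (subN sS); apply: (subD sS); exact: (subZ sS).
Qed.

Lemma oppE a b hh : eqH0 (fun h => a h + b h) (fun _ => 0) -> H0 hh ->
  b hh = oppf a hh.
Proof.
move=> e hh0; rewrite /oppf; apply/eqP; rewrite -addr_eq0 addrC; apply/eqP.
exact: e.
Qed.

Lemma V_br al a u y : isRoot al -> isRoot a -> Conn a al -> Lroot a u ->
  Iclass al (br u y).
Proof.
move=> hal ha hc hu.
have [hy [s [hhy [hs ->]]]] := split_seq y.
rewrite brDr; apply: subD (I_sub al) _ _.
  apply: (I_V (a := phin a 1)).
    by apply/LC_iff => //; split; [exact: isRoot_psi | exact: Conn_trans (Conn_psi ha) hc].
  by apply: Lroot_eq (W4 hu (Lroot_H hhy)) => h hh; rewrite addr0.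
rewrite (addf_ssum _ (addf_brr u)).
apply: (sub_ssum (I_sub al) (R := fun _ v => Iclass al v)) => //.
apply: Fam_map hs => p [hb hv] /=.
case: (KB ha hb hu hv) => [->|[[e hH2]|[hr hl]]].
- exact: sub0 (I_sub al).
- apply: (I_H (b := a)) => //; first by apply/LC_iff.
  apply: Lroot_eq hv => h hh; exact: (oppE e hh).
- apply: I_V hl; apply/LC_iff => //; split => //.
  by apply: Conn_trans _ hc; apply: Conn_sym; apply: Conn_sum.
Qed.

Lemma H_br al a u w y : isRoot al -> isRoot a -> Conn a al -> Lroot a u ->
  Lroot (oppf a) w -> Iclass al (br (br u w) y).
Proof.
move=> hal ha hc hu hw.
have [t [ht ey]] := grseq (psi y).
have ey' : y = ssum (map (fun p => (p.1, phi p.2)) t).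
  by rewrite -(addf_ssum _ addf_phi) -ey psiK.
rewrite ey' (addf_ssum _ (addf_brr _)).
apply: (sub_ssum (I_sub al) (R := fun _ v => Iclass al v)) => //.
rewrite -map_comp; apply: Fam_map ht => p gz /=.
pose S := fun v => Iclass al (br v (phi p.2)).
have sS : subspace S.
  exact: preim_sub (I_sub al) (addf_brl _) (fun c x => brZl c x _).
apply: (hom2 (S := S) (P := Lroot a) (Q := Lroot (oppf a))) => //;
  try exact: Hdec_Lroot.
move=> g1 g2 x y' gx px gy py; rewrite /S.
rewrite (skew (br_gr gx gy) (phi_gr gz)); apply: subN (I_sub al) _.
apply: subZ (I_sub al) _.
apply: (jac3 (I_sub al) gz gx gy).
- exact: (@V_br al _ _ _ hal (isRoot_psi ha) (Conn_trans (Conn_psi ha) hc) (Lroot_phi px)).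
- have hoa := isRoot_opp ha.
  have c2 := Conn_trans (Conn_psi hoa) (Conn_trans (Conn_sym (Conn_opp ha)) hc).
  exact: (@V_br al _ _ _ hal (isRoot_psi hoa) c2 (Lroot_phi py)).
Qed.

Lemma I_br al x y : isRoot al -> Iclass al x -> Iclass al (br x y).
Proof.
move=> hal [h [v [hh [hv ->]]]]; rewrite brDl; apply: subD (I_sub al) _ _.
  pose S := fun h => Iclass al (br h y).
  have sS : subspace S by exact: preim_sub (I_sub al) (addf_brl _) (fun c x => brZl c x _).
  apply: (span_ind (S := S)) hh => // c u w [b [hb [hu hw]]].
  rewrite /S brZl; apply: subZ (I_sub al) _.
  by case/LC_iff: hb => // r cb; apply: H_br hu hw.
pose S := fun h => Iclass al (br h y).
have sS : subspace S by exact: preim_sub (I_sub al) (addf_brl _) (fun c x => brZl c x _).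
apply: (fam_ind (S := S)) hv => // i u hi hu.
by case/LC_iff: hi => // r ci; apply: V_br hu.
Qed.

Lemma I_phi al x : isRoot al -> Iclass al x -> Iclass al (phi x).
Proof.
move=> hal [h [v [hh [hv ->]]]]; rewrite addf_phi; apply: subD (I_sub al) _ _.
  pose S := fun h => Iclass al (phi h).
  have sS : subspace S by exact: preim_sub (I_sub al) addf_phi phiZ.
  apply: (span_ind (S := S)) hh => // c u w [b [hb [hu hw]]].
  rewrite /S phiZ phi_br; apply: subZ (I_sub al) _.
  case/LC_iff: hb => // r cb; apply: (I_H (b := phin b 1)).
  - by apply/LC_iff => //; split; [exact: isRoot_psi | exact: Conn_trans (Conn_psi r) cb].
  - exact: Lroot_phi.
  - by apply: Lroot_eq (Lroot_phi hw) => h' _.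
pose S := fun h => Iclass al (phi h).
have sS : subspace S by exact: preim_sub (I_sub al) addf_phi phiZ.
apply: (fam_ind (S := S)) hv => // i u hi hu.
case/LC_iff: hi => // r ci; apply: (I_V (a := phin i 1)); last exact: Lroot_phi.
by apply/LC_iff => //; split; [exact: isRoot_psi | exact: Conn_trans (Conn_psi r) ci].
Qed.

Lemma I_psi al x : isRoot al -> Iclass al x -> Iclass al (psi x).
Proof.
move=> hal [h [v [hh [hv ->]]]]; rewrite addf_psi; apply: subD (I_sub al) _ _.
  pose S := fun h => Iclass al (psi h).
  have sS : subspace S by exact: preim_sub (I_sub al) addf_psi psiZ.
  apply: (span_ind (S := S)) hh => // c u w [b [hb [hu hw]]].
  rewrite /S psiZ psi_br; apply: subZ (I_sub al) _.
  case/LC_iff: hb => // r cb; apply: (I_H (b := fun h => b (phi h))).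
  - by apply/LC_iff => //; split; [exact: isRoot_phi | exact: Conn_trans (Conn_phi r) cb].
  - exact: Lroot_psi.
  - by apply: Lroot_eq (Lroot_psi hw) => h' _.
pose S := fun h => Iclass al (psi h).
have sS : subspace S by exact: preim_sub (I_sub al) addf_psi psiZ.
apply: (fam_ind (S := S)) hv => // i u hi hu.
case/LC_iff: hi => // r ci; apply: (I_V (a := fun h => i (phi h))); last exact: Lroot_psi.
by apply/LC_iff => //; split; [exact: isRoot_phi | exact: Conn_trans (Conn_phi r) ci].
Qed.

Lemma I_grad al x : isRoot al -> Iclass al x ->
  fam_sum (fun _ => True) (fun g y => Lg g y /\ Iclass al y) x.
Proof.
move=> hal [h [v [hh [hv ->]]]].
pose S := fam_sum (fun _ : G => True) (fun g y => Lg g y /\ Iclass al y).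
have sS : subspace S.
  by apply: fam_sum_sub => g c y _ [h1 h2]; split; [apply: subZ (grsub g) _ | apply: subZ (I_sub al) _].
apply: (subD sS).
  apply: (span_ind (S := S)) hh => // c u w [b [hb [hu hw]]].
  apply: (subZ sS).
  apply: (hom2 (S := S) (P := Lroot b) (Q := Lroot (oppf b))) => //; try exact: Hdec_Lroot.
  move=> g1 g2 x' y' gx px gy py; apply: (fam1 (i := g1 + g2)) => //.
  by split; [apply: br_gr | apply: I_H hb px py].
apply: (fam_ind (S := S)) hv => // i u hi hu.
have [t [ht ->]] := Hdec_Lroot hu.
apply: (sub_ssum sS (R := fun g v => Lg g v /\ Lroot i v)) => // g y [h1 h2].
by apply: (fam1 (i := g)) => //; split => //; apply: I_V hi h2.
Qed.

Lemma P1 al : isRoot al -> ideal Lg br phi (Iclass al).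
Proof.
move=> hal; split; first by split; [apply: I_sub | move=> x; apply: I_grad].
split; first by move=> x y; apply: I_br.
split; first by move=> x; apply: I_phi.
by move=> x hx; exists (psi x); split; [apply: I_psi | rewrite psiK].
Qed.


Lemma and_sub (A B : L -> Prop) : subspace A -> subspace B -> subspace (fun x => A x /\ B x).
Proof.
move=> [a0 ha] [b0 hb]; split => // c x y [h1 h2] [h3 h4]; split; [exact: ha | exact: hb].
Qed.
Lemma zl_sub y : subspace (fun x => br x y = 0).
Proof. exact: preim_sub zero_sub (addf_brl y) (fun c x => brZl c x y). Qed.
Lemma zr_sub x : subspace (fun y => br x y = 0).
Proof. exact: preim_sub zero_sub (addf_brr x) (fun c y => brZr c x y). Qed.

Lemma orthV a b u w : isRoot a -> isRoot b -> ~ Conn a b -> Lroot a u -> Lroot b w ->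
  br u w = 0.
Proof.
move=> ha hb nab hu hw.
case: (KB ha hb hu hw) => [->|[[e _]|[hr _]]] //; exfalso; apply: nab.
  apply: Conn_eqr (Conn_opp ha) => h hh; apply: esym; exact: (oppE e hh).
have hr' : isRoot (fun h => b (psi h) + a (psi h)).
  by apply: isRoot_eq hr => h _; rewrite addrC.
apply: Conn_trans (Conn_sum ha hb hr) _; apply: Conn_sym.
apply: Conn_eqr (Conn_sum hb ha hr') => h _; by rewrite addrC.
Qed.

Lemma orthHV_hom a b u w z g1 g2 g3 : isRoot a -> isRoot b -> ~ Conn a b ->
  Lg g1 u -> Lroot a u -> Lg g2 w -> Lroot (oppf a) w -> Lg g3 z -> Lroot b z ->
  br (br u w) z = 0 /\ br z (br u w) = 0.
Proof.
move=> ha hb nab gu hu gw hw gz hz.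
have gz' := gr_psi gz; have hz' := Lroot_psi hz; have hb' := isRoot_phi hb.
have e1 : br w (psi z) = 0.
  apply: (orthV (isRoot_opp ha) hb') hw hz' => C; apply: nab.
  exact: Conn_trans (Conn_opp ha) (Conn_trans C (Conn_phi hb)).
have e2 : br (psi z) u = 0.
  apply: (orthV hb' ha) hz' hu => C; apply: nab; apply: Conn_sym.
  exact: Conn_trans (Conn_sym (Conn_phi hb)) C.
have J : br (phi (psi z)) (br u w) = 0.
  apply: (jac3 zero_sub gz' gu gw); by rewrite ?e1 ?e2 br0r.
rewrite psiK in J; split => //.
by rewrite (skew (br_gr gu gw) gz) J scaler0 oppr0.
Qed.

Lemma orthHV a b u w z : isRoot a -> isRoot b -> ~ Conn a b ->
  Lroot a u -> Lroot (oppf a) w -> Lroot b z ->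
  br (br u w) z = 0 /\ br z (br u w) = 0.
Proof.
move=> ha hb nab hu hw hz.
have [t [ht ->]] := Hdec_Lroot hz.
pose S := fun z => br (br u w) z = 0 /\ br z (br u w) = 0.
have sS : subspace S by apply: and_sub; [apply: zr_sub | apply: zl_sub].
apply: (sub_ssum sS (R := fun g v => Lg g v /\ Lroot b v)) => // g z' [gz hz'].
pose S' := fun v => br v z' = 0 /\ br z' v = 0.
have sS' : subspace S' by apply: and_sub; [apply: zl_sub | apply: zr_sub].
apply: (hom2 (S := S') (P := Lroot a) (Q := Lroot (oppf a))) => //; try exact: Hdec_Lroot.
move=> g1 g2 x y gx px gy py; exact: orthHV_hom gx px gy py gz hz'.
Qed.

Lemma brH a u w : Lroot a u -> Lroot (oppf a) w -> H (br u w).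
Proof.
move=> hu hw; apply: Z1; apply: Lroot_eq (W4 hu hw) => h hh; by rewrite /oppf addrN.
Qed.

Lemma P2 al be : isRoot al -> isRoot be -> ~ connected al be ->
  forall x y, Iclass al x -> Iclass be y -> br x y = 0.
Proof.
move=> hal hbe nc x y hx hy.
have nC : ~ Conn al be by move=> C; apply: nc; apply: Conn_to_conn.
have nab : forall a b, isRoot a -> Conn a al -> isRoot b -> Conn b be -> ~ Conn a b.
  move=> a b _ ca _ cb C; apply: nC.
  exact: Conn_trans (Conn_sym ca) (Conn_trans C cb).
case: hy => hy [vy [hhy [hvy ->]]].
have genH : forall a u w, isRoot a -> Conn a al -> Lroot a u -> Lroot (oppf a) w ->
    br (br u w) (hy + vy) = 0.
  move=> a u w ha ca hu hw; rewrite brDr (Hab (brH hu hw) (HL_H hhy)) add0r.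
  apply: (fam_ind (S := fun v => br (br u w) v = 0)) hvy => //; first exact: zr_sub.
  move=> b z /(LC_iff _ hbe) [hb cb] hz.
  exact: (orthHV ha hb (nab _ _ ha ca hb cb) hu hw hz).1.
have genV : forall a u, isRoot a -> Conn a al -> Lroot a u -> br u (hy + vy) = 0.
  move=> a u ha ca hu; rewrite brDr; rewrite (_ : br u hy = 0) ?add0r.
    apply: (fam_ind (S := fun v => br u v = 0)) hvy => //; first exact: zr_sub.
    move=> b z /(LC_iff _ hbe) [hb cb] hz.
    exact: (orthV ha hb (nab _ _ ha ca hb cb) hu hz).
  apply: (span_ind (S := fun v => br u v = 0)) hhy => //; first exact: zr_sub.
  move=> c u' w' [b [/(LC_iff _ hbe) [hb cb] [hu' hw']]].
  rewrite brZr (orthHV hb ha _ hu' hw' hu).2 ?scaler0 //.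
  by move=> C; apply: (nab _ _ ha ca hb cb); apply: Conn_sym.
case: hx => hx [vx [hhx [hvx ->]]]; rewrite brDl.
rewrite (_ : br hx _ = 0) ?add0r.
  apply: (fam_ind (S := fun v => br v (hy + vy) = 0)) hvx => //; first exact: zl_sub.
  move=> a u /(LC_iff _ hal) [ha ca] hu; exact: genV ha ca hu.
apply: (span_ind (S := fun v => br v (hy + vy) = 0)) hhx => //; first exact: zl_sub.
move=> c u w [a [/(LC_iff _ hal) [ha ca] [hu hw]]].
by rewrite brZl (genH a u w ha ca hu hw) scaler0.
Qed.

Lemma LC_self a : isRoot a -> LambdaClass a a.
Proof. by move=> ha; apply/LC_iff => //; split => //; apply: Conn_refl. Qed.

Lemma P3 x : fam_sum isRoot Iclass x.
Proof.
pose GS := fam_sum isRoot Iclass.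
have sGS : subspace GS by apply: fam_sum_sub => i c v _; apply: subZ (I_sub i).
have GSI : forall a v, isRoot a -> Iclass a v -> GS v by move=> a v; apply: fam1.
apply: (span_ind (S := GS)) (hLL x) => // c u w _; apply: (subZ sGS).
have [hu [su [hhu [hsu ->]]]] := split_seq u.
have [hw [sw [hhw [hsw ->]]]] := split_seq w.
have sl : forall y, subspace (fun x => GS (br x y)).
  by move=> y; exact: preim_sub sGS (addf_brl y) (fun c x => brZl c x y).
have sr : forall x, subspace (fun y => GS (br x y)).
  by move=> x'; exact: preim_sub sGS (addf_brr x') (fun c y => brZr c x' y).
have caseH : forall h y, H h -> GS (br h y).
  move=> h y hh; have [hy [sy [hhy [hsy ->]]]] := split_seq y.
  rewrite brDr; apply: (subD sGS).
    by rewrite Hab //; apply: sub0.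
  rewrite (addf_ssum _ (addf_brr h)).
  apply: (sub_ssum sGS (R := fun _ v => GS v)) => //.
  apply: Fam_map hsy => p [hb hv] /=.
  apply: (GSI (phin p.1 1)); first exact: isRoot_psi.
  apply: (I_V (a := phin p.1 1)); first by apply: LC_self; apply: isRoot_psi.
  by apply: Lroot_eq (W4 (Lroot_H hh) hv) => h' _; rewrite add0r.
have caseV : forall a u y, isRoot a -> Lroot a u -> GS (br u y).
  move=> a u' y ha hu'; have [hy [sy [hhy [hsy ->]]]] := split_seq y.
  rewrite brDr; apply: (subD sGS).
    apply: (GSI (phin a 1)); first exact: isRoot_psi.
    apply: (I_V (a := phin a 1)); first by apply: LC_self; apply: isRoot_psi.
    by apply: Lroot_eq (W4 hu' (Lroot_H hhy)) => h' _; rewrite addr0.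
  rewrite (addf_ssum _ (addf_brr u')).
  apply: (sub_ssum sGS (R := fun _ v => GS v)) => //.
  apply: Fam_map hsy => p [hb hv] /=.
  case: (KB ha hb hu' hv) => [->|[[e hH']|[hr hl]]].
  - exact: sub0.
  - apply: (GSI a) => //; apply: (I_H (b := a)) => //; first exact: LC_self.
    by apply: Lroot_eq hv => h hh; exact: (oppE e hh).
  - by apply: (GSI _ _ hr); apply: I_V hl; apply: LC_self.
rewrite brDl; apply: (subD sGS); first exact: caseH.
rewrite (addf_ssum _ (addf_brl _)).
apply: (sub_ssum sGS (R := fun _ v => GS v)) => //.
apply: Fam_map hsu => p [ha hv] /=; exact: caseV ha hv.
Qed.


Lemma ssum_flatten {I : Type} (ls : seq (seq (I * L))) :
  ssum (flatten ls) = \sum_(l <- ls) ssum l.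
Proof. by elim: ls => [|l ls IH]; rewrite ?big_nil ?big_cons //= ssum_cat IH. Qed.

Lemma group_cat {I : Type} (E : I -> I -> Prop) (s1 s2 : seq (I * L)) j :
  group E (s1 ++ s2) j = group E s1 j + group E s2 j.
Proof. by rewrite /group filter_cat ssum_cat. Qed.

Lemma group_flatten {I : Type} (E : I -> I -> Prop) (ls : seq (seq (I * L))) j :
  group E (flatten ls) j = \sum_(l <- ls) group E l j.
Proof. by elim: ls => [|l ls IH]; rewrite ?big_nil ?big_cons //= group_cat IH. Qed.

Lemma P4 : fam_indep isRoot Iclass connected.
Proof.
move=> n i v hv hd hs.
have hc : forall k l, k != l -> ~ Conn (i k) (i l).
  by move=> k l kl C; apply: (hd k l kl); apply: Conn_to_conn.
have dec : forall k, exists p : L * seq ((L -> K) * L), HLambda (i k) p.1 /\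
    Fam (fun a z => isRoot a /\ Conn a (i k) /\ Lroot a z) p.2 /\ v k = p.1 + ssum p.2.
  move=> k; case: (hv k) => hr [h [w [hh [hw ->]]]].
  have [s [hs' ->]] := (fam_sum_seq _ _ _).1 hw.
  exists (h, s); split => //; split => //.
  by apply: Fam_impl hs' => a z [/(LC_iff _ hr) [h1 h2] h3].
pose f k := sval (constructive_indefinite_description _ (dec k)).
have hf : forall k, HLambda (i k) (f k).1 /\
    Fam (fun a z => isRoot a /\ Conn a (i k) /\ Lroot a z) (f k).2 /\
    v k = (f k).1 + ssum (f k).2.
  by move=> k; exact: (svalP (constructive_indefinite_description _ (dec k))).
pose S := flatten (map (fun k => (f k).2) (enum 'I_n)).
pose Hs := \sum_(k < n) (f k).1.
have eS : Hs + ssum S = 0.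
  rewrite -hs ssum_flatten big_map big_enum /= /Hs -big_split /=.
  by apply: eq_bigr => k _; case: (hf k) => _ [_ ->].
have HS : H Hs.
  by apply: sub_sum_ord Hsub _ => k; case: (hf k) => h1 _; apply: HL_H h1.
have FS : Fam RF S.
  rewrite /S; elim: (enum 'I_n) => [|k r IH] //=; apply: Fam_cat IH.
  by case: (hf k) => _ [h2 _]; apply: Fam_impl h2 => a z [h1 [_ h3]].
have [eH hg] := RI HS FS eS.
move=> k0.
have gk : forall j, group eqH0 (f k0).2 j = 0.
  move=> j; case: (classic (isRoot j /\ Conn j (i k0))) => [[hj cj]|nj].
    have := hg j; rewrite /S group_flatten big_map big_enum /= (bigD1 k0) //=.
    rewrite big1 ?addr0 // => k hk.
    apply: group_none; case: (hf k) => _ [h2 _].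
    apply/List.Forall_forall => p hp e.
    have [_ [cp _]] := Fam_in h2 hp.
    apply: (hc k0 k); first by rewrite eq_sym.
    exact: Conn_trans (Conn_sym cj) (Conn_eql e cp).
  apply: group_none; case: (hf k0) => _ [h2 _].
  apply/List.Forall_forall => p hp e; apply: nj.
  have [rp [cp _]] := Fam_in h2 hp.
  by split; [apply: isRoot_eq e rp | apply: Conn_eql e cp].
have sk : ssum (f k0).2 = 0.
  apply: (sum_from_groups eqH0_refl eqH0_sym eqH0_trans RF_compat RF_D) gk.
  by case: (hf k0) => _ [h2 _]; apply: Fam_impl h2 => a z [h1 [_ h3]].
have hk0 : (f k0).1 = 0.
  apply: hZ => y.
  have ek : (f k0).1 = - \sum_(k < n | k != k0) (f k).1.
    by apply/eqP; rewrite -addr_eq0 addrC; move: eH; rewrite /Hs (bigD1 k0) //= addrC => ->.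
  have IH0 : forall k, Iclass (i k) (f k).1.
    move=> k; exists (f k).1, 0; split; first by case: (hf k).
    by split; [apply: sub0 (VL_sub _) | rewrite addr0].
  have hr : forall k, isRoot (i k) by move=> k; case: (hv k).
  have [hy [sy [hhy [hsy ->]]]] := split_seq y.
  rewrite brDr Hab ?add0r; last by []; last by case: (hf k0) => h1 _; apply: HL_H h1.
  rewrite (addf_ssum _ (addf_brr _)); apply: ssum_zero.
  apply: Fam_map hsy => p [hb hz] /=.
  have Iz : Iclass p.1 p.2 by apply: I_V hz; apply: LC_self.
  case: (classic (Conn p.1 (i k0))) => cb.
    rewrite ek brNl (big_morph (br^~ p.2) (addf_brl p.2) (br0l p.2)) big1 ?oppr0 // => k hk.
    apply: (P2 (hr k) hb) (IH0 k) Iz => C; apply: (hc k k0 hk).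
    exact: Conn_trans (conn_to_Conn hb C) cb.
  apply: (P2 (hr k0) hb) (IH0 k0) Iz => C; apply: cb.
  exact: Conn_sym (conn_to_Conn hb C).
by case: (hf k0) => _ [_ ->]; rewrite hk0 sk addr0.
Qed.

Lemma main_all :
  (forall alpha, isRoot alpha -> ideal Lg br phi (Iclass alpha)) /\
  (forall alpha beta, isRoot alpha -> isRoot beta -> ~ connected alpha beta ->
     forall x y, Iclass alpha x -> Iclass beta y -> br x y = 0) /\
  (forall x, fam_sum isRoot Iclass x) /\
  fam_indep isRoot Iclass connected.
Proof.
split; first exact: P1.
split; first by move=> al be ha hb nc x y; apply: P2.
split; first exact: P3.
exact: P4.
Qed.

End Main.

Unset Implicit Arguments.
Set Strict Implicit.

Theorem mainTheorem11 (K : fieldType) (G : zmodType) (L : lmodType K)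
  (Lg : G -> L -> Prop) (br : L -> L -> L) (phi psi : L -> L)
  (eps : G -> G -> K) (H : L -> Prop) :
  HomLieColor Lg br phi eps ->
  (* regular: phi bijective, with inverse psi *)
  cancel phi psi -> cancel psi phi ->
  max_abelian_subalgebra Lg br phi H ->
  split_alg Lg H br phi ->
  symmetric_roots Lg H br phi ->
  zero_annihilator br ->
  (* [L, L] = L *)
  (forall x, span_brackets br (fun _ _ => True) x) ->
  (forall alpha, isRoot Lg H br phi alpha ->
     ideal Lg br phi (Iclass Lg H br phi psi alpha)) /\
  (forall alpha beta, isRoot Lg H br phi alpha -> isRoot Lg H br phi beta ->
     ~ connected Lg H br phi psi alpha beta ->
     forall x y, Iclass Lg H br phi psi alpha x -> Iclass Lg H br phi psi beta y ->
       br x y = 0) /\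
  (forall x, fam_sum (isRoot Lg H br phi) (Iclass Lg H br phi psi) x) /\
  fam_indep (isRoot Lg H br phi) (Iclass Lg H br phi psi)
            (connected Lg H br phi psi).
Proof.
move=> h1 h2 h3 h4 h5 h6 h7 h8.
exact: (main_all h1 h2 h3 h4 h5 h6 h7 h8).
Qed.
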